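(* Let $0\le\lambda<1$ and $0\le\beta\le2\lambda$. Then $C_\beta[f]\in\mathcal{S}^*$ for every $f\in\mathcal{S}^*(\lambda)$.
   Context: $\mathbb{D}$ is the open unit disk; $\mathcal{A}$ the class of analytic $f$ on $\mathbb{D}$ with $f(0)=0$, $f'(0)=1$. For $\lambda<1$, $\mathcal{S}^*(\lambda)=\{f\in\mathcal{A}: f(z)\ne0 \text{ for } z\ne0,\ \mathrm{Re}\,(zf'(z)/f(z))>\lambda \text{ on }\mathbb{D}\}$, and $\mathcal{S}^*=\mathcal{S}^*(0)$ is the class of normalized starlike univalent functions. For $\beta\ge0$ and $f$ analytic on $\mathbb{D}$ with $f(0)=0$, $C_\beta[f](z)=\int_0^z \frac{f(w)}{w(1-w)^\beta}\,dw$ (principal branch of $(1-w)^\beta$). *)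

(* Defs.v *)
From Stdlib Require Import Reals.
From Coquelicot Require Import Coquelicot.
Open Scope R_scope.

Definition in_disk (z : C) : Prop := Cmod z < 1.

Definition analytic_on_disk (f : C -> C) : Prop :=
  forall z : C, in_disk z -> @ex_derive C_AbsRing C_NormedModule f z.

Definition principal_arg (u : C) : R :=
  let x := Re u in let y := Im u in
  if Rlt_dec 0 x then atan (y / x)
  else if Rlt_dec x 0 then
    (if Rle_dec 0 y then atan (y / x) + PI else atan (y / x) - PI)
  else if Rlt_dec 0 y then PI / 2
  else if Rlt_dec y 0 then - (PI / 2)
  else 0.

(* Principal branch u^b = exp (b * Log u), Log the principal logarithm
   (only used for u <> 0; the value at u = 0 is irrelevant). *)
Definition cpow_principal (u : C) (b : R) : C :=
  (exp (b * ln (Cmod u)) * cos (b * principal_arg u),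
   exp (b * ln (Cmod u)) * sin (b * principal_arg u)).

Definition normalized_analytic (f : C -> C) : Prop :=
  analytic_on_disk f /\ f (RtoC 0) = RtoC 0 /\ @is_derive C_AbsRing C_NormedModule f (RtoC 0) (RtoC 1).

(* S*(lam): f in A, f(z) <> 0 for z <> 0, and Re (z f'(z)/f(z)) > lam on the
   disk (at z = 0 the quotient is understood by continuity, equal to 1,
   so the condition is imposed for z <> 0). *)
Definition starlike_of_order (lam : R) (f : C -> C) : Prop :=
  normalized_analytic f /\
  (forall z : C, in_disk z -> z <> RtoC 0 -> f z <> RtoC 0) /\
  (forall z : C, in_disk z -> z <> RtoC 0 ->
     forall d : C, @is_derive C_AbsRing C_NormedModule f z d ->
       lam < Re (Cdiv (Cmult z d) (f z))).

Definition starlike (f : C -> C) : Prop := starlike_of_order 0 f.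

(* C_beta[f](z) = int_0^z f(w) / (w (1-w)^beta) dw, the integral taken along
   the segment [0, z], i.e. w = t z, dw = z dt, t in [0,1]. *)
Definition C_beta (beta : R) (f : C -> C) (z : C) : C :=
  @RInt C_R_CompleteNormedModule
    (fun t : R =>
       Cmult (Cdiv (f (Cmult (RtoC t) z))
                   (Cmult (Cmult (RtoC t) z)
                          (cpow_principal (Cminus (RtoC 1) (Cmult (RtoC t) z)) beta)))
             z)
    0 1.

(* Main.v *)
Require Import Defs.
From Stdlib Require Import Reals Lra Lia Psatz Classical IndefiniteDescription.
From Coquelicot Require Import Coquelicot.
Open Scope R_scope.

(* Proof outline:
   - Goursat's theorem for triangles (subdivision argument) => the radial
     integral C_beta[f] is a holomorphic primitive of h(w) = f(w)/(w (1-w)^beta).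
   - (1-w)^beta is shown complex differentiable via Cauchy-Riemann.
   - q = g/(z g') satisfies z q' = 1 - q Phi with Re Phi > lam - beta/2 >= 0;
     a minimum-principle argument (first boundary point where Re q = 0,
     radial and tangential derivative tests) shows Re q > 0. *)


Open Scope R_scope.

Definition CD (f : C -> C) (z d : C) : Prop :=
  forall eps : R, 0 < eps -> exists del : R, 0 < del /\
    forall w : C, Cmod (w - z)%C < del ->
      Cmod (f w - f z - d * (w - z))%C <= eps * Cmod (w - z)%C.

Lemma Cmod_le_abs (x : C) : Cmod x <= Rabs (fst x) + Rabs (snd x).
Proof.
  unfold Cmod. apply Rsqr_incr_0_var.
  - rewrite Rsqr_sqrt. 2: nra.
    replace (fst x ^ 2 + snd x ^ 2) with (Rsqr (fst x) + Rsqr (snd x)) by (unfold Rsqr; ring).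
    rewrite (Rsqr_abs (fst x)), (Rsqr_abs (snd x)).
    pose proof (Rabs_pos (fst x)); pose proof (Rabs_pos (snd x)). unfold Rsqr. nra.
  - pose proof (Rabs_pos (fst x)); pose proof (Rabs_pos (snd x)). lra.
Qed.

Lemma CD_is_derive f z d : CD f z d -> @is_derive C_AbsRing C_NormedModule f z d.
Proof.
  intros H. split.
  - apply is_linear_scal_l.
  - intros x Hx. apply (@is_filter_lim_locally_unique C_AbsRing (AbsRing_NormedModule C_AbsRing)) in Hx. subst x.
    intros eps. destruct (H eps (cond_pos eps)) as [del [Hdel H1]].
    exists (mkposreal _ Hdel). intros y Hy.
    simpl in Hy. unfold AbsRing_ball, abs, minus, plus, opp in Hy; simpl in Hy.
    specialize (H1 y Hy). 
    change (Cmod (Cminus (Cminus (f y) (f z)) (Cmult (Cminus y z) d)) <= eps * Cmod (Cminus y z)).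
    replace (Cmult (Cminus y z) d) with (Cmult d (Cminus y z)) by apply Cmult_comm.
    exact H1.
Qed.

Lemma is_derive_CD f z d : @is_derive C_AbsRing C_NormedModule f z d -> CD f z d.
Proof.
  intros [_ H] eps Heps.
  specialize (H z (fun P HP => HP)).
  destruct (H (mkposreal _ Heps)) as [del Hdel].
  exists del. split. apply cond_pos.
  intros w Hw. 
  specialize (Hdel w Hw). 
  change (Cmod (Cminus (Cminus (f w) (f z)) (Cmult (Cminus w z) d)) <= eps * Cmod (Cminus w z)) in Hdel.
  replace (Cmult d (Cminus w z)) with (Cmult (Cminus w z) d) by apply Cmult_comm.
  exact Hdel.
Qed.

Lemma CD_is_derive' f z d : CD f z d -> @is_derive C_AbsRing (AbsRing_NormedModule C_AbsRing) f z d.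
Proof.
  intros H. split.
  - apply is_linear_scal_l.
  - intros x Hx. apply (@is_filter_lim_locally_unique C_AbsRing (AbsRing_NormedModule C_AbsRing)) in Hx. subst x.
    intros eps. destruct (H eps (cond_pos eps)) as [del [Hdel H1]].
    exists (mkposreal _ Hdel). intros y Hy.
    simpl in Hy. unfold AbsRing_ball, abs, minus, plus, opp in Hy; simpl in Hy.
    specialize (H1 y Hy). 
    change (Cmod (Cminus (Cminus (f y) (f z)) (Cmult (Cminus y z) d)) <= eps * Cmod (Cminus y z)).
    replace (Cmult (Cminus y z) d) with (Cmult d (Cminus y z)) by apply Cmult_comm.
    exact H1.
Qed.

Lemma is_derive_CD' f z d : @is_derive C_AbsRing (AbsRing_NormedModule C_AbsRing) f z d -> CD f z d.
Proof.
  intros [_ H] eps Heps.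
  specialize (H z (fun P HP => HP)).
  destruct (H (mkposreal _ Heps)) as [del Hdel].
  exists del. split. apply cond_pos.
  intros w Hw. 
  specialize (Hdel w Hw). 
  change (Cmod (Cminus (Cminus (f w) (f z)) (Cmult (Cminus w z) d)) <= eps * Cmod (Cminus w z)) in Hdel.
  replace (Cmult d (Cminus w z)) with (Cmult (Cminus w z) d) by apply Cmult_comm.
  exact Hdel.
Qed.

Open Scope C_scope.

Lemma CD_plus f g z df dg : CD f z df -> CD g z dg -> CD (fun w => f w + g w) z (df + dg).
Proof.
  intros Hf Hg. apply is_derive_CD.
  apply CD_is_derive in Hf. apply CD_is_derive in Hg.
  exact (@is_derive_plus C_AbsRing C_NormedModule f g z df dg Hf Hg).
Qed.

Lemma CD_mult f g z df dg : CD f z df -> CD g z dg -> CD (fun w => f w * g w) z (df * g z + f z * dg).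
Proof.
  intros Hf Hg. apply is_derive_CD'.
  apply CD_is_derive' in Hf. apply CD_is_derive' in Hg.
  exact (@is_derive_mult C_AbsRing f g z df dg Hf Hg Cmult_comm).
Qed.

Lemma CD_comp f g z df dg : CD f (g z) df -> CD g z dg -> CD (fun w => f (g w)) z (dg * df).
Proof.
  intros Hf Hg. apply is_derive_CD.
  apply CD_is_derive in Hf. apply CD_is_derive' in Hg.
  exact (@is_derive_comp C_AbsRing C_NormedModule f g z df dg Hf Hg).
Qed.

Lemma CD_const (a z : C) : CD (fun _ => a) z 0.
Proof.
  intros eps Heps. exists 1. split. lra. intros w _.
  replace (a - a - 0 * (w - z)) with (RtoC 0) by ring. rewrite Cmod_0.
  apply Rmult_le_pos. lra. apply Cmod_ge_0.
Qed.

Lemma CD_id (z : C) : CD (fun w => w) z 1.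
Proof.
  intros eps Heps. exists 1. split. lra. intros w _.
  replace (w - z - 1 * (w - z)) with (RtoC 0) by ring. rewrite Cmod_0.
  apply Rmult_le_pos. lra. apply Cmod_ge_0.
Qed.

Lemma CD_ext_loc f g z d : 
  (exists del, (0 < del)%R /\ forall w, (Cmod (w - z) < del)%R -> f w = g w) ->
  CD f z d -> CD g z d.
Proof.
  intros [del0 [Hd0 He]] Hf eps Heps.
  destruct (Hf eps Heps) as [del [Hd H]].
  exists (Rmin del del0). split. apply Rmin_pos; lra.
  intros w Hw. 
  assert (Hz : f z = g z). { apply He. replace (z - z) with (RtoC 0) by ring. rewrite Cmod_0. lra. }
  rewrite <- He, <- Hz. apply H. eapply Rlt_le_trans. exact Hw. apply Rmin_l.
  eapply Rlt_le_trans. exact Hw. apply Rmin_r.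
Qed.

Lemma Cmod_sub_sym (a b : C) : Cmod (a - b) = Cmod (b - a).
Proof. rewrite <- Cmod_opp. f_equal. ring. Qed.

Lemma Cmod_triangle_sub (a b c : C) : (Cmod (a - c) <= Cmod (a - b) + Cmod (b - c))%R.
Proof. replace (a - c) with ((a - b) + (b - c)) by ring. apply Cmod_triangle. Qed.

Lemma Cmod_rev_tri (a b : C) : (Cmod a - Cmod b <= Cmod (a - b))%R.
Proof. pose proof (Cmod_triangle (a - b) b). replace (a - b + b) with a in H by ring. lra. Qed.

Lemma CD_inv (z : C) : z <> 0 -> CD (fun w => / w) z (- / (z * z)).
Proof.
  intros Hz eps Heps.
  assert (Hm : (0 < Cmod z)%R) by (apply Cmod_gt_0; auto).
  exists (Rmin (Cmod z / 2) (eps * (Cmod z * Cmod z * Cmod z) / 2)). split.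
  { apply Rmin_pos. lra. apply Rmult_lt_0_compat; [|lra]. apply Rmult_lt_0_compat; [lra|]. apply Rmult_lt_0_compat; [|lra]. nra. }
  intros w Hw.
  assert (Hw1 : (Cmod (w - z) < Cmod z / 2)%R) by (eapply Rlt_le_trans; [exact Hw| apply Rmin_l]).
  assert (Hw2 : (Cmod (w - z) < eps * (Cmod z * Cmod z * Cmod z) / 2)%R) by (eapply Rlt_le_trans; [exact Hw| apply Rmin_r]).
  assert (Hwm : (Cmod z / 2 < Cmod w)%R).
  { pose proof (Cmod_rev_tri z w). rewrite Cmod_sub_sym in H. lra. }
  assert (Hw0 : w <> 0). { intro E. subst. rewrite Cmod_0 in Hwm. lra. }
  replace (/ w - / z - - / (z * z) * (w - z)) with ((w - z) * (w - z) / (w * z * z)) by (field; auto).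
  rewrite Cmod_div. 2: { repeat apply Cmult_neq_0; auto. }
  rewrite !Cmod_mult.
  set (a := Cmod (w - z)). set (m := Cmod z). set (n := Cmod w). fold a m n in Hw1, Hw2, Hwm, Hm.
  assert (0 <= a)%R by apply Cmod_ge_0.
  apply (Rmult_le_reg_r (n * m * m)). apply Rmult_lt_0_compat; [|lra]. apply Rmult_lt_0_compat; lra.
  unfold Rdiv. rewrite Rmult_assoc, Rinv_l. 2: { apply Rgt_not_eq. apply Rmult_lt_0_compat; [|lra]. apply Rmult_lt_0_compat; lra. }
  rewrite Rmult_1_r.
  assert (a * a <= a * (eps * (m * m * m) / 2))%R by (apply Rmult_le_compat_l; lra).
  assert (eps * a * (m*m*m) / 2 <= eps * a * (n * m * m))%R.
  { assert (0 <= eps * a * (m * m))%R by (apply Rmult_le_pos; [apply Rmult_le_pos|]; nra). nra. }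
  nra.
Qed.

Lemma CD_unique f z d1 d2 : CD f z d1 -> CD f z d2 -> d1 = d2.
Proof.
  intros H1 H2.
  destruct (Ceq_dec d1 d2) as [E|NE]; auto. exfalso.
  assert (Hp : (0 < Cmod (d1 - d2))%R) by (apply Cmod_gt_0; intro E; apply NE; apply Ceq_minus; auto).
  set (e := (Cmod (d1 - d2) / 4)%R).
  assert (He : (0 < e)%R) by (unfold e; lra).
  destruct (H1 e He) as [del1 [Hd1 K1]]. destruct (H2 e He) as [del2 [Hd2 K2]].
  set (t := (Rmin del1 del2 / 2)%R).
  assert (Ht : (0 < t)%R) by (unfold t; pose proof (Rmin_pos _ _ Hd1 Hd2); lra).
  assert (Hmt : Cmod ((z + RtoC t) - z) = t).
  { replace (z + RtoC t - z) with (RtoC t) by ring. rewrite Cmod_R. apply Rabs_pos_eq. lra. }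
  assert (Htd : (t < Rmin del1 del2)%R) by (unfold t; pose proof (Rmin_pos _ _ Hd1 Hd2); lra).
  specialize (K1 (z + RtoC t)). specialize (K2 (z + RtoC t)). rewrite Hmt in K1, K2.
  assert (A1 := K1 (Rlt_le_trans _ _ _ Htd (Rmin_l _ _))).
  assert (A2 := K2 (Rlt_le_trans _ _ _ Htd (Rmin_r _ _))).
  assert (Cmod ((d1 - d2) * (z + RtoC t - z)) <= 2 * e * t)%R.
  { replace ((d1 - d2) * (z + RtoC t - z)) with ((f (z + RtoC t) - f z - d2 * (z + RtoC t - z)) - (f (z + RtoC t) - f z - d1 * (z + RtoC t - z))) by ring.
    eapply Rle_trans. unfold Cminus at 1. apply Cmod_triangle. rewrite Cmod_opp. lra. }
  rewrite Cmod_mult, Hmt in H. unfold e in H. nra.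
Qed.

Definition Ccont (f : C -> C) (z : C) : Prop :=
  forall eps : R, (0 < eps)%R -> exists del : R, (0 < del)%R /\
    forall w : C, (Cmod (w - z) < del)%R -> (Cmod (f w - f z) < eps)%R.

Lemma CD_cont f z d : CD f z d -> Ccont f z.
Proof.
  intros H eps Heps.
  destruct (H 1%R Rlt_0_1) as [del [Hd K]].
  exists (Rmin del (eps / (1 + Cmod d + 1))). split.
  { apply Rmin_pos. auto. apply Rdiv_lt_0_compat. auto. pose proof (Cmod_ge_0 d). lra. }
  intros w Hw.
  assert (Hw1 : (Cmod (w - z) < del)%R) by (eapply Rlt_le_trans; [exact Hw|apply Rmin_l]).
  assert (Hw2 : (Cmod (w - z) < eps / (1 + Cmod d + 1))%R) by (eapply Rlt_le_trans; [exact Hw|apply Rmin_r]).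
  specialize (K w Hw1).
  replace (f w - f z) with ((f w - f z - d * (w - z)) + d * (w - z)) by ring.
  eapply Rle_lt_trans. apply Cmod_triangle. rewrite Cmod_mult.
  pose proof (Cmod_ge_0 d). pose proof (Cmod_ge_0 (w - z)).
  assert (Cmod (w - z) * (1 + Cmod d + 1) < eps)%R.
  { apply (Rmult_lt_compat_r (1 + Cmod d + 1)) in Hw2. 2: lra.
    unfold Rdiv in Hw2. rewrite Rmult_assoc, Rinv_l in Hw2 by lra. lra. }
  nra.
Qed.


Open Scope R_scope.
Open Scope C_scope.

Ltac cring := apply injective_projections; simpl; first [ring | field].

Definition Fs (h : C -> C) (a b : C) : R -> C := fun s => (b - a) * h (a + RtoC s * (b - a)).
Definition seg (h : C -> C) (a b : C) : C := @RInt C_R_CompleteNormedModule (Fs h a b) 0 1.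

Lemma norm_CR (x : C_R_NormedModule) : norm x = Cmod x.
Proof.
  change (sqrt (Rabs (fst x) ^ 2 + Rabs (snd x) ^ 2) = Cmod x).
  rewrite !pow2_abs. reflexivity.
Qed.

Lemma cont_RC (F : R -> C) (s0 : R) :
  (forall eps, (0 < eps)%R -> exists del, (0 < del)%R /\ forall s, (Rabs (s - s0) < del)%R -> (Cmod (F s - F s0) < eps)%R) ->
  @continuous R_UniformSpace C_R_CompleteNormedModule F s0.
Proof.
  intros H. unfold continuous. apply filterlim_locally. intros eps.
  destruct (H eps (cond_pos eps)) as [del [Hd K]].
  exists (mkposreal _ Hd). intros s Hs.
  change (Rabs (s - s0) < del)%R in Hs.
  specialize (K s Hs).
  pose proof (Rmax_Cmod (F s - F s0)) as Hm.
  split; simpl; unfold AbsRing_ball, abs, minus, plus, opp; simpl.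
  - eapply Rle_lt_trans; [|exact K]. eapply Rle_trans; [apply Rmax_l|exact Hm].
  - eapply Rle_lt_trans; [|exact K]. eapply Rle_trans; [apply Rmax_r|exact Hm].
Qed.

Lemma Fs_cont h a b s0 : Ccont h (a + RtoC s0 * (b - a)) ->
  @continuous R_UniformSpace C_R_CompleteNormedModule (Fs h a b) s0.
Proof.
  intros Hc. apply cont_RC. intros eps Heps.
  set (M := (Cmod (b - a) + 1)%R).
  assert (HM : (0 < M)%R) by (unfold M; pose proof (Cmod_ge_0 (b - a)); lra).
  destruct (Hc (eps / M)%R) as [del [Hd K]]. apply Rdiv_lt_0_compat; lra.
  exists (del / M)%R. split. apply Rdiv_lt_0_compat; lra.
  intros s Hs. unfold Fs.
  assert (E1 : (a + RtoC s * (b - a)) - (a + RtoC s0 * (b - a)) = RtoC (s - s0) * (b - a)).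
  { rewrite RtoC_minus. ring. }
  assert (Hlt : (Cmod ((a + RtoC s * (b - a)) - (a + RtoC s0 * (b - a))) < del)%R).
  { rewrite E1, Cmod_mult, Cmod_R.
    apply (Rmult_lt_compat_r M) in Hs; [|lra]. unfold Rdiv in Hs. rewrite Rmult_assoc, Rinv_l in Hs by lra.
    pose proof (Rabs_pos (s - s0)). pose proof (Cmod_ge_0 (b - a)). unfold M in Hs. nra. }
  specialize (K _ Hlt).
  replace ((b - a) * h (a + RtoC s * (b - a)) - (b - a) * h (a + RtoC s0 * (b - a)))
    with ((b - a) * (h (a + RtoC s * (b - a)) - h (a + RtoC s0 * (b - a)))) by ring.
  rewrite Cmod_mult.
  pose proof (Cmod_ge_0 (b - a)). pose proof (Cmod_ge_0 (h (a + RtoC s * (b - a)) - h (a + RtoC s0 * (b - a)))).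
  apply (Rmult_lt_compat_r M) in K; [|lra]. unfold Rdiv in K. rewrite Rmult_assoc, Rinv_l in K by lra.
  unfold M in K. nra.
Qed.

Definition SegCont (h : C -> C) (a b : C) : Prop :=
  forall s : R, (0 <= s <= 1)%R -> Ccont h (a + RtoC s * (b - a)).

Lemma Fs_ex h a b u v : SegCont h a b -> (0 <= u <= 1)%R -> (0 <= v <= 1)%R ->
  @ex_RInt C_R_CompleteNormedModule (Fs h a b) u v.
Proof.
  intros H Hu Hv. apply ex_RInt_continuous. intros z Hz. apply Fs_cont. apply H.
  split. eapply Rle_trans; [|apply Hz]. apply Rmin_glb; lra.
  eapply Rle_trans; [apply Hz|]. apply Rmax_lub; lra.
Qed.

Lemma seg_rev h a b : SegCont h a b -> seg h b a = - seg h a b.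
Proof.
  intros H. unfold seg.
  assert (Hex : @ex_RInt C_R_CompleteNormedModule (Fs h a b) 0 1) by (apply Fs_ex; auto; lra).
  assert (Hex' : @ex_RInt C_R_CompleteNormedModule (Fs h a b) ((-1) * 0 + 1)%R ((-1) * 1 + 1)%R).
  { replace ((-1) * 0 + 1)%R with 1%R by ring. replace ((-1) * 1 + 1)%R with 0%R by ring.
    apply Fs_ex; auto; lra. }
  pose proof (@RInt_comp_lin C_R_CompleteNormedModule (Fs h a b) (-1) 1 0 1 Hex') as E.
  replace ((-1) * 0 + 1)%R with 1%R in E by ring. replace ((-1) * 1 + 1)%R with 0%R in E by ring.
  rewrite <- (@opp_RInt_swap C_R_CompleteNormedModule (Fs h a b) 0 1 Hex) in E.
  change (@opp _ (@RInt C_R_CompleteNormedModule (Fs h a b) 0 1)) with (Copp (@RInt C_R_CompleteNormedModule (Fs h a b) 0 1)) in E.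
  rewrite <- E. apply (@RInt_ext C_R_CompleteNormedModule). intros x _. unfold Fs. rewrite scal_R_Cmult.
  replace (a + RtoC ((-1) * x + 1) * (b - a)) with (b + RtoC x * (a - b)) by cring.
  cring.
Qed.

Lemma seg_split h a b r : SegCont h a b -> (0 <= r <= 1)%R ->
  seg h a b = seg h a (a + RtoC r * (b - a)) + seg h (a + RtoC r * (b - a)) b.
Proof.
  intros H Hr. unfold seg.
  assert (E1 : @RInt C_R_CompleteNormedModule (Fs h a (a + RtoC r * (b - a))) 0 1 =
               @RInt C_R_CompleteNormedModule (Fs h a b) 0 r).
  { assert (Hex : @ex_RInt C_R_CompleteNormedModule (Fs h a b) (r * 0 + 0)%R (r * 1 + 0)%R).
    { replace (r * 0 + 0)%R with 0%R by ring. replace (r * 1 + 0)%R with r by ring. apply Fs_ex; auto; lra. }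
    pose proof (@RInt_comp_lin C_R_CompleteNormedModule (Fs h a b) r 0 0 1 Hex) as E.
    replace (r * 0 + 0)%R with 0%R in E by ring. replace (r * 1 + 0)%R with r in E by ring.
    rewrite <- E. apply (@RInt_ext C_R_CompleteNormedModule). intros x _. unfold Fs. rewrite scal_R_Cmult.
    replace (a + RtoC x * (a + RtoC r * (b - a) - a)) with (a + RtoC (r * x + 0) * (b - a)) by cring.
    cring. }
  assert (E2 : @RInt C_R_CompleteNormedModule (Fs h (a + RtoC r * (b - a)) b) 0 1 =
               @RInt C_R_CompleteNormedModule (Fs h a b) r 1).
  { assert (Hex : @ex_RInt C_R_CompleteNormedModule (Fs h a b) ((1 - r) * 0 + r)%R ((1 - r) * 1 + r)%R).
    { replace ((1 - r) * 0 + r)%R with r by ring. replace ((1 - r) * 1 + r)%R with 1%R by ring. apply Fs_ex; auto; lra. }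
    pose proof (@RInt_comp_lin C_R_CompleteNormedModule (Fs h a b) (1 - r) r 0 1 Hex) as E.
    replace ((1 - r) * 0 + r)%R with r in E by ring. replace ((1 - r) * 1 + r)%R with 1%R in E by ring.
    rewrite <- E. apply (@RInt_ext C_R_CompleteNormedModule). intros x _. unfold Fs. rewrite scal_R_Cmult.
    replace (a + RtoC r * (b - a) + RtoC x * (b - (a + RtoC r * (b - a)))) with (a + RtoC ((1 - r) * x + r) * (b - a)) by cring.
    cring. }
  rewrite E1, E2. symmetry.
  exact (@RInt_Chasles C_R_CompleteNormedModule (Fs h a b) 0 r 1 (Fs_ex h a b 0 r H ltac:(lra) Hr) (Fs_ex h a b r 1 H Hr ltac:(lra))).
Qed.

Lemma seg_bound h a b M : SegCont h a b ->
  (forall s, (0 <= s <= 1)%R -> (Cmod (h (a + RtoC s * (b - a))%C) <= M)%R) ->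
  (Cmod (seg h a b) <= Cmod (b - a) * M)%R.
Proof.
  intros H HM. unfold seg.
  assert (Hex := Fs_ex h a b 0 1 H ltac:(lra) ltac:(lra)).
  rewrite <- norm_CR. replace (Cmod (b - a) * M)%R with ((1 - 0) * (Cmod (b - a) * M))%R by ring.
  apply (@norm_RInt_le C_R_CompleteNormedModule (Fs h a b) (fun _ => Cmod (b - a) * M)%R 0 1 _ ((1 - 0) * (Cmod (b - a) * M))%R).
  lra.
  - intros x Hx. rewrite norm_CR. unfold Fs. rewrite Cmod_mult. apply Rmult_le_compat_l. apply Cmod_ge_0. apply HM; lra.
  - apply RInt_correct. exact Hex.
  - apply (@is_RInt_const R_NormedModule).
Qed.

Lemma seg_minus h1 h2 a b : SegCont h1 a b -> SegCont h2 a b ->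
  seg (fun w => h1 w - h2 w) a b = seg h1 a b - seg h2 a b.
Proof.
  intros H1 H2. unfold seg.
  pose proof (@RInt_minus C_R_CompleteNormedModule (Fs h1 a b) (Fs h2 a b) 0 1
     (Fs_ex h1 a b 0 1 H1 ltac:(lra) ltac:(lra)) (Fs_ex h2 a b 0 1 H2 ltac:(lra) ltac:(lra))) as E.
  change (@minus _ (@RInt C_R_CompleteNormedModule (Fs h1 a b) 0 1) (@RInt C_R_CompleteNormedModule (Fs h2 a b) 0 1))
    with (Cminus (@RInt C_R_CompleteNormedModule (Fs h1 a b) 0 1) (@RInt C_R_CompleteNormedModule (Fs h2 a b) 0 1)) in E.
  rewrite <- E. apply (@RInt_ext C_R_CompleteNormedModule). intros x _. unfold Fs.
  change (@minus _ ((b - a) * h1 (a + RtoC x * (b - a))) ((b - a) * h2 (a + RtoC x * (b - a))))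
    with (Cminus ((b - a) * h1 (a + RtoC x * (b - a))) ((b - a) * h2 (a + RtoC x * (b - a)))).
  cring.
Qed.

Lemma is_RInt_lin01 (p q : R) : is_RInt (fun s => p + s * q)%R 0 1 (p + q / 2)%R.
Proof.
  assert (H : is_RInt (fun s => p + s * q)%R 0 1 (minus ((fun s => p * s + q * (s * s) / 2) 1) ((fun s => p * s + q * (s * s) / 2) 0))%R).
  { apply (@is_RInt_derive R_CompleteNormedModule (fun s => p * s + q * (s * s) / 2)%R (fun s => p + s * q)%R).
    - intros x _. auto_derive. trivial. field.
    - intros x _. apply (@ex_derive_continuous R_AbsRing R_NormedModule). auto_derive. trivial. }
  replace (p + q / 2)%R with (minus ((fun s => p * s + q * (s * s) / 2) 1) ((fun s => p * s + q * (s * s) / 2) 0))%R.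
  exact H. unfold minus, plus, opp; simpl. field.
Qed.

Lemma RInt_affC (A B : C) :
  @RInt C_R_CompleteNormedModule (fun s => A + RtoC s * B) 0 1 = A + B * RtoC (1/2).
Proof.
  apply (@is_RInt_unique C_R_CompleteNormedModule).
  replace (A + B * RtoC (1/2)) with ((fst A + fst B / 2)%R, (snd A + snd B / 2)%R) by cring.
  apply (@is_RInt_fct_extend_pair R_NormedModule R_NormedModule).
  - eapply is_RInt_ext. 2: apply is_RInt_lin01. intros x _. simpl. ring.
  - eapply is_RInt_ext. 2: apply is_RInt_lin01. intros x _. simpl. ring.
Qed.

Lemma seg_aff (P Q a b : C) :
  seg (fun w => P + Q * w) a b = (b - a) * (P + Q * a) + (b - a) * (b - a) * Q * RtoC (1/2).
Proof.
  unfold seg. rewrite <- RInt_affC. apply (@RInt_ext C_R_CompleteNormedModule). intros x _. unfold Fs. cring.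
Qed.


Open Scope R_scope.

Record B3 := mkB { b1 : R; b2 : R; b3 : R }.

Definition ptB (a b c : C) (P : B3) : C := (RtoC (b1 P) * a + RtoC (b2 P) * b + RtoC (b3 P) * c)%C.
Definition goodB (P : B3) : Prop := 0 <= b1 P /\ 0 <= b2 P /\ 0 <= b3 P /\ b1 P + b2 P + b3 P = 1.
Definition midB (P Q : B3) : B3 := mkB ((b1 P + b1 Q) / 2) ((b2 P + b2 Q) / 2) ((b3 P + b3 Q) / 2).
Definition combB (P Q : B3) (s : R) : B3 :=
  mkB (b1 P + s * (b1 Q - b1 P)) (b2 P + s * (b2 Q - b2 P)) (b3 P + s * (b3 Q - b3 P)).
Definition closeB (P Q : B3) (D : R) : Prop :=
  (-D <= b1 P - b1 Q <= D) /\ (-D <= b2 P - b2 Q <= D) /\ (-D <= b3 P - b3 Q <= D).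

Lemma good_comb P Q s : goodB P -> goodB Q -> 0 <= s <= 1 -> goodB (combB P Q s).
Proof.
  unfold goodB, combB; simpl. intros [? [? [? ?]]] [? [? [? ?]]] Hs.
  repeat split; nra.
Qed.

Lemma good_mid P Q : goodB P -> goodB Q -> goodB (midB P Q).
Proof. unfold goodB, midB; simpl. intros; lra. Qed.

Lemma pt_comb a b c P Q s : ptB a b c (combB P Q s) = (ptB a b c P + RtoC s * (ptB a b c Q - ptB a b c P))%C.
Proof. unfold ptB, combB; simpl. cring. Qed.

Lemma pt_mid a b c P Q : ptB a b c (midB P Q) = (ptB a b c P + RtoC (1/2) * (ptB a b c Q - ptB a b c P))%C.
Proof. unfold ptB, midB; simpl. cring. Qed.

Lemma closeB_comb P Q s D : closeB P Q D -> 0 <= s <= 1 -> closeB (combB P Q s) P D.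
Proof. unfold closeB, combB; simpl. intros H Hs. repeat split; nra. Qed.

Lemma closeB_sym P Q D : closeB P Q D -> closeB Q P D.
Proof. unfold closeB. intros; lra. Qed.

Lemma closeB_trans P Q R D1 D2 : closeB P Q D1 -> closeB Q R D2 -> closeB P R (D1 + D2).
Proof. unfold closeB. intros; lra. Qed.

Lemma Cmod_RtoC_mult (r : R) (z : C) : Cmod (RtoC r * z)%C = Rabs r * Cmod z.
Proof. rewrite Cmod_mult, Cmod_R. reflexivity. Qed.

Lemma pt_dist a b c P Q D : closeB P Q D ->
  Cmod (ptB a b c P - ptB a b c Q)%C <= D * (Cmod a + Cmod b + Cmod c).
Proof.
  unfold closeB, ptB. intros [H1 [H2 H3]].
  replace ((RtoC (b1 P) * a + RtoC (b2 P) * b + RtoC (b3 P) * c) - (RtoC (b1 Q) * a + RtoC (b2 Q) * b + RtoC (b3 Q) * c))%C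
    with (RtoC (b1 P - b1 Q) * a + RtoC (b2 P - b2 Q) * b + RtoC (b3 P - b3 Q) * c)%C by cring.
  eapply Rle_trans. apply Cmod_triangle. eapply Rle_trans. apply Rplus_le_compat_r. apply Cmod_triangle.
  rewrite !Cmod_RtoC_mult.
  assert (Rabs (b1 P - b1 Q) <= D) by (apply Rabs_le; lra).
  assert (Rabs (b2 P - b2 Q) <= D) by (apply Rabs_le; lra).
  assert (Rabs (b3 P - b3 Q) <= D) by (apply Rabs_le; lra).
  pose proof (Cmod_ge_0 a). pose proof (Cmod_ge_0 b). pose proof (Cmod_ge_0 c).
  nra.
Qed.

Definition HypG (h : C -> C) (a b c : C) : Prop :=
  forall P, goodB P -> exists d, CD h (ptB a b c P) d.

Lemma segcont_good h a b c P Q : HypG h a b c -> goodB P -> goodB Q ->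
  SegCont h (ptB a b c P) (ptB a b c Q).
Proof.
  intros H HP HQ s Hs. rewrite <- pt_comb.
  destruct (H (combB P Q s) (good_comb P Q s HP HQ Hs)) as [d Hd].
  exact (CD_cont _ _ _ Hd).
Qed.

Record Tri := mkT { tP : B3; tQ : B3; tR : B3 }.

Definition TI (h : C -> C) (a b c : C) (t : Tri) : C :=
  (seg h (ptB a b c (tP t)) (ptB a b c (tQ t)) + seg h (ptB a b c (tQ t)) (ptB a b c (tR t))
   + seg h (ptB a b c (tR t)) (ptB a b c (tP t)))%C.

Definition sub1 t := mkT (tP t) (midB (tP t) (tQ t)) (midB (tR t) (tP t)).
Definition sub2 t := mkT (midB (tP t) (tQ t)) (tQ t) (midB (tQ t) (tR t)).
Definition sub3 t := mkT (midB (tR t) (tP t)) (midB (tQ t) (tR t)) (tR t).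
Definition sub4 t := mkT (midB (tP t) (tQ t)) (midB (tQ t) (tR t)) (midB (tR t) (tP t)).

Definition goodT t := goodB (tP t) /\ goodB (tQ t) /\ goodB (tR t).

Lemma TI_sub h a b c t : HypG h a b c -> goodT t ->
  TI h a b c t = (TI h a b c (sub1 t) + TI h a b c (sub2 t) + TI h a b c (sub3 t) + TI h a b c (sub4 t))%C.
Proof.
  intros H [HP [HQ HR]]. destruct t as [P Q R]. simpl in *.
  unfold TI, sub1, sub2, sub3, sub4; simpl.
  assert (C1 := segcont_good h a b c _ _ H (good_mid _ _ HP HQ) (good_mid _ _ HR HP)).
  assert (C2 := segcont_good h a b c _ _ H (good_mid _ _ HP HQ) (good_mid _ _ HQ HR)).
  assert (C3 := segcont_good h a b c _ _ H (good_mid _ _ HQ HR) (good_mid _ _ HR HP)).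
  assert (S1 := segcont_good h a b c _ _ H HP HQ).
  assert (S2 := segcont_good h a b c _ _ H HQ HR).
  assert (S3 := segcont_good h a b c _ _ H HR HP).
  rewrite !pt_mid in *.
  set (p := ptB a b c P) in *. set (q := ptB a b c Q) in *. set (r := ptB a b c R) in *.
  rewrite (seg_split h p q (1/2) S1 ltac:(lra)).
  rewrite (seg_split h q r (1/2) S2 ltac:(lra)).
  rewrite (seg_split h r p (1/2) S3 ltac:(lra)).
  rewrite (seg_rev h _ _ C1). rewrite (seg_rev h _ _ C2). rewrite (seg_rev h _ _ C3).
  ring.
Qed.

Definition step (h : C -> C) (a b c : C) (t : Tri) : Tri :=
  if Rle_dec (Cmod (TI h a b c t) / 4) (Cmod (TI h a b c (sub1 t))) then sub1 t
  else if Rle_dec (Cmod (TI h a b c t) / 4) (Cmod (TI h a b c (sub2 t))) then sub2 t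
  else if Rle_dec (Cmod (TI h a b c t) / 4) (Cmod (TI h a b c (sub3 t))) then sub3 t
  else sub4 t.

Lemma step_sub h a b c t : step h a b c t = sub1 t \/ step h a b c t = sub2 t \/
  step h a b c t = sub3 t \/ step h a b c t = sub4 t.
Proof.
  unfold step. destruct Rle_dec; auto. destruct Rle_dec; auto. destruct Rle_dec; auto.
Qed.

Lemma step_big h a b c t : HypG h a b c -> goodT t ->
  Cmod (TI h a b c t) / 4 <= Cmod (TI h a b c (step h a b c t)).
Proof.
  intros H Ht. unfold step.
  destruct Rle_dec as [E1|E1]; auto. destruct Rle_dec as [E2|E2]; auto. destruct Rle_dec as [E3|E3]; auto.
  apply Rnot_le_lt in E1. apply Rnot_le_lt in E2. apply Rnot_le_lt in E3.
  rewrite (TI_sub h a b c t H Ht) at 1.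
  set (t1 := TI h a b c (sub1 t)) in *. set (t2 := TI h a b c (sub2 t)) in *.
  set (t3 := TI h a b c (sub3 t)) in *. set (t4 := TI h a b c (sub4 t)) in *.
  pose proof (Cmod_triangle (t1 + t2 + t3) t4). pose proof (Cmod_triangle (t1 + t2) t3).
  pose proof (Cmod_triangle t1 t2).
  rewrite (TI_sub h a b c t H Ht) in E1, E2, E3. fold t1 t2 t3 t4 in E1, E2, E3.
  lra.
Qed.

Lemma good_step h a b c t : goodT t -> goodT (step h a b c t).
Proof.
  intros [HP [HQ HR]].
  destruct (step_sub h a b c t) as [E|[E|[E|E]]]; rewrite E; unfold goodT, sub1, sub2, sub3, sub4; simpl;
  refine (conj _ (conj _ _)); try apply good_mid; auto.
Qed.

Definition smallT t D := closeB (tP t) (tQ t) D /\ closeB (tQ t) (tR t) D /\ closeB (tR t) (tP t) D.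

Lemma small_step h a b c t D : smallT t D -> smallT (step h a b c t) (D / 2) /\ closeB (tP (step h a b c t)) (tP t) D.
Proof.
  intros [H1 [H2 H3]]. unfold closeB in *.
  destruct (step_sub h a b c t) as [E|[E|[E|E]]]; rewrite E; unfold smallT, closeB, sub1, sub2, sub3, sub4, midB; simpl;
  repeat split; lra.
Qed.

Definition tri0 := mkT (mkB 1 0 0) (mkB 0 1 0) (mkB 0 0 1).

Fixpoint triseq (h : C -> C) (a b c : C) (n : nat) : Tri :=
  match n with O => tri0 | S m => step h a b c (triseq h a b c m) end.

Lemma triseq_good h a b c n : goodT (triseq h a b c n).
Proof.
  induction n; simpl. unfold goodT, goodB, tri0; simpl; repeat split; lra.
  apply good_step; auto.
Qed.

Lemma triseq_small h a b c n : smallT (triseq h a b c n) ((1/2)^n).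
Proof.
  induction n; simpl. unfold smallT, closeB, tri0; simpl; repeat split; lra.
  replace ((1/2) * (1/2)^n) with ((1/2)^n / 2) by field. apply small_step; auto.
Qed.

Lemma triseq_move h a b c n : closeB (tP (triseq h a b c (S n))) (tP (triseq h a b c n)) ((1/2)^n).
Proof. simpl. apply small_step. apply triseq_small. Qed.

Lemma triseq_big h a b c n : HypG h a b c ->
  Cmod (TI h a b c tri0) * (1/4)^n <= Cmod (TI h a b c (triseq h a b c n)).
Proof.
  intros H. induction n; simpl. lra.
  pose proof (step_big h a b c (triseq h a b c n) H (triseq_good h a b c n)). lra.
Qed.

Lemma triseq_far h a b c n m : closeB (tP (triseq h a b c (n + m))) (tP (triseq h a b c n)) (2 * (1/2)^n - 2 * (1/2)^(n+m)).
Proof.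
  induction m.
  - rewrite Nat.add_0_r. unfold closeB. repeat split; lra.
  - replace (n + S m)%nat with (S (n + m)) by lia.
    pose proof (triseq_move h a b c (n + m)) as Hm.
    pose proof (closeB_trans _ _ _ _ _ Hm IHm) as Ht.
    replace (2 * (1/2)^n - 2 * (1/2)^(S (n + m))) with ((1 / 2) ^ (n + m) + (2 * (1 / 2) ^ n - 2 * (1 / 2) ^ (n + m))).
    exact Ht. simpl. field.
Qed.

Lemma half_pow_small (y : R) : 0 < y -> exists N, forall n, (n >= N)%nat -> (1/2)^n < y.
Proof.
  intros Hy. destruct (pow_lt_1_zero (1/2) ltac:(rewrite Rabs_pos_eq; lra) y Hy) as [N HN].
  exists N. intros n Hn. specialize (HN n Hn). rewrite Rabs_pos_eq in HN. auto.
  apply pow_le. lra.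
Qed.

Lemma half_pow_pos n : 0 < (1/2)^n.
Proof. apply pow_lt. lra. Qed.

Lemma cauchy_geo (u : nat -> R) :
  (forall n m, -(2 * (1/2)^n) <= u (n + m)%nat - u n <= 2 * (1/2)^n) ->
  exists l, forall n, -(2 * (1/2)^n) <= l - u n <= 2 * (1/2)^n.
Proof.
  intros H.
  assert (Hc : Cauchy_crit u).
  { intros eps Heps. destruct (half_pow_small (eps / 4) ltac:(lra)) as [N HN].
    exists N. intros n m Hn Hm. unfold Rdist.
    pose proof (H N (n - N)%nat) as A1. pose proof (H N (m - N)%nat) as A2.
    replace (N + (n - N))%nat with n in A1 by lia. replace (N + (m - N))%nat with m in A2 by lia.
    specialize (HN N (le_n N)). apply Rabs_def1; lra. }
  destruct (Rcomplete.R_complete u Hc) as [l Hl]. exists l. intros n.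
  split.
  - apply Ropp_le_cancel. apply Rle_plus_epsilon. intros eps Heps.
    destruct (Hl eps Heps) as [M HM]. specialize (HM (n + M)%nat ltac:(lia)). unfold Rdist in HM.
    apply Rabs_def2 in HM. specialize (H n M). lra.
  - apply Rle_plus_epsilon. intros eps Heps.
    destruct (Hl eps Heps) as [M HM]. specialize (HM (n + M)%nat ltac:(lia)). unfold Rdist in HM.
    apply Rabs_def2 in HM. specialize (H n M). lra.
Qed.

Lemma nonneg_geo (x K : R) : (forall n, -(K * (1/2)^n) <= x) -> 0 <= x.
Proof.
  intros H. destruct (Rle_or_lt 0 x) as [|Hx]; auto.
  destruct (Rle_or_lt K 0) as [HK|HK].
  - specialize (H O). simpl in H. nra.
  - destruct (half_pow_small (- x / K)) as [N HN]. apply Rdiv_lt_0_compat; lra.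
    specialize (HN N (le_n N)). specialize (H N).
    apply (Rmult_lt_compat_l K) in HN; auto. unfold Rdiv in HN.
    replace (K * (- x * / K)) with (-x) in HN by (field; lra). lra.
Qed.

Lemma zero_geo (x K : R) : (forall n, Rabs x <= K * (1/2)^n) -> x = 0.
Proof.
  intros H.
  assert (0 <= - Rabs x). { apply (nonneg_geo _ K). intros n. specialize (H n). lra. }
  pose proof (Rabs_pos x). assert (Rabs x = 0) by lra.
  destruct (Req_dec x 0); auto. exfalso. apply Rabs_no_R0 in H3. auto.
Qed.

Lemma closeB_mono P Q D1 D2 : closeB P Q D1 -> D1 <= D2 -> closeB P Q D2.
Proof. unfold closeB. intros; lra. Qed.

Lemma Ccont_aff (al d w : C) : Ccont (fun z => al + d * z)%C w.
Proof.
  assert (H : CD (fun z => al + d * z)%C w (0 + (0 * w + d * 1))%C).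
  { apply CD_plus. apply CD_const. apply CD_mult. apply CD_const. apply CD_id. }
  exact (CD_cont _ _ _ H).
Qed.

Lemma segcont_minus h1 h2 x y : SegCont h1 x y -> SegCont h2 x y -> SegCont (fun w => h1 w - h2 w)%C x y.
Proof.
  intros H1 H2 s Hs eps Heps.
  destruct (H1 s Hs (eps/2) ltac:(lra)) as [d1 [Hd1 K1]].
  destruct (H2 s Hs (eps/2) ltac:(lra)) as [d2 [Hd2 K2]].
  exists (Rmin d1 d2). split. apply Rmin_pos; auto.
  intros w Hw. specialize (K1 w (Rlt_le_trans _ _ _ Hw (Rmin_l _ _))). specialize (K2 w (Rlt_le_trans _ _ _ Hw (Rmin_r _ _))).
  set (u := (x + RtoC s * (y - x))%C) in *.
  replace (h1 w - h2 w - (h1 u - h2 u))%C with ((h1 w - h1 u) - (h2 w - h2 u))%C by ring.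
  eapply Rle_lt_trans. unfold Cminus at 1. apply Cmod_triangle. rewrite Cmod_opp. lra.
Qed.

Lemma edge_bound h a b c p d eps del X Y L D :
  (forall w, Cmod (w - p)%C < del -> Cmod (h w - h p - d * (w - p))%C <= eps * Cmod (w - p)%C) ->
  p = ptB a b c L ->
  SegCont h (ptB a b c X) (ptB a b c Y) ->
  closeB X Y D -> closeB X L (3 * D) -> 0 <= D -> 0 < eps ->
  4 * D * (Cmod a + Cmod b + Cmod c) < del ->
  Cmod (seg (fun w => h w - ((h p - d * p) + d * w))%C (ptB a b c X) (ptB a b c Y))
    <= (D * (Cmod a + Cmod b + Cmod c)) * (eps * (4 * D * (Cmod a + Cmod b + Cmod c))).
Proof.
  intros Hd Hp HS HXY HXL HD He Hdel.
  set (K := Cmod a + Cmod b + Cmod c) in *.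
  assert (HK : 0 <= K) by (unfold K; pose proof (Cmod_ge_0 a); pose proof (Cmod_ge_0 b); pose proof (Cmod_ge_0 c); lra).
  assert (E : Cmod (ptB a b c Y - ptB a b c X)%C <= D * K) by (apply pt_dist; apply closeB_sym; auto).
  eapply Rle_trans. apply (seg_bound _ _ _ (eps * (4 * D * K))).
  - apply segcont_minus. auto. intros s _. apply Ccont_aff.
  - intros s Hs. rewrite <- pt_comb.
    assert (Hc : closeB (combB X Y s) L (D + 3 * D)) by (eapply closeB_trans; [apply closeB_comb; eauto| auto]).
    pose proof (pt_dist a b c _ _ _ Hc) as Hw. fold K in Hw. rewrite <- Hp in Hw.
    set (w := ptB a b c (combB X Y s)) in *.
    replace (h w - (h p - d * p + d * w))%C with (h w - h p - d * (w - p))%C by ring.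
    eapply Rle_trans. apply Hd. nra.
    apply Rmult_le_compat_l. lra. nra.
  - apply Rmult_le_compat_r. apply Rmult_le_pos. lra. apply Rmult_le_pos; [|lra]. lra. exact E.
Qed.

Theorem goursat_tri h a b c : HypG h a b c -> TI h a b c tri0 = 0%C.
Proof.
  intros H.
  set (T := triseq h a b c).
  destruct (cauchy_geo (fun n => b1 (tP (T n)))) as [l1 Hl1].
  { intros n m. pose proof (triseq_far h a b c n m) as [F _]. fold T in F.
    pose proof (half_pow_pos (n + m)). lra. }
  destruct (cauchy_geo (fun n => b2 (tP (T n)))) as [l2 Hl2].
  { intros n m. pose proof (triseq_far h a b c n m) as [_ [F _]]. fold T in F.
    pose proof (half_pow_pos (n + m)). lra. }
  destruct (cauchy_geo (fun n => b3 (tP (T n)))) as [l3 Hl3].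
  { intros n m. pose proof (triseq_far h a b c n m) as [_ [_ F]]. fold T in F.
    pose proof (half_pow_pos (n + m)). lra. }
  set (L := mkB l1 l2 l3).
  assert (HPL : forall n, closeB (tP (T n)) L (2 * (1/2)^n)).
  { intros n. unfold closeB, L; simpl. specialize (Hl1 n). specialize (Hl2 n). specialize (Hl3 n). lra. }
  assert (HL : goodB L).
  { unfold goodB, L; simpl.
    assert (G : forall n, goodB (tP (T n))) by (intros n; apply (triseq_good h a b c n)).
    repeat split.
    - apply (nonneg_geo _ 2). intros n. specialize (Hl1 n). destruct (G n) as [? _]. lra.
    - apply (nonneg_geo _ 2). intros n. specialize (Hl2 n). destruct (G n) as [_ [? _]]. lra.
    - apply (nonneg_geo _ 2). intros n. specialize (Hl3 n). destruct (G n) as [_ [_ [? _]]]. lra.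
    - assert (l1 + l2 + l3 - 1 = 0). 2: lra.
      apply (zero_geo _ 6). intros n. specialize (Hl1 n). specialize (Hl2 n). specialize (Hl3 n).
      destruct (G n) as [_ [_ [_ Gs]]]. apply Rabs_le. lra. }
  destruct (H L HL) as [d Hd].
  set (p := ptB a b c L).
  set (K := Cmod a + Cmod b + Cmod c).
  assert (HK : 0 <= K) by (unfold K; pose proof (Cmod_ge_0 a); pose proof (Cmod_ge_0 b); pose proof (Cmod_ge_0 c); lra).
  apply Cmod_eq_0.
  apply Rle_antisym. 2: apply Cmod_ge_0.
  assert (Hb : forall eps, 0 < eps -> Cmod (TI h a b c tri0) <= 12 * K * K * eps).
  { intros eps He.
    destruct (Hd eps He) as [del [Hdel Kd]].
    destruct (half_pow_small (del / (4 * K + 1))) as [n Hn]. apply Rdiv_lt_0_compat; lra.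
    specialize (Hn n (le_n n)).
    set (D := (1/2)^n) in *.
    assert (HD : 0 < D) by apply half_pow_pos.
    assert (HDK : 4 * D * K < del).
    { apply (Rmult_lt_compat_r (4 * K + 1)) in Hn; [|lra]. unfold Rdiv in Hn.
      rewrite Rmult_assoc, Rinv_l in Hn by lra. nra. }
    pose proof (triseq_good h a b c n) as [GP [GQ GR]].
    pose proof (triseq_small h a b c n) as [SPQ [SQR SRP]].
    pose proof (HPL n) as CPL. fold T D in GP, GQ, GR, SPQ, SQR, SRP.
    fold T in CPL. fold D in CPL.
    destruct (T n) as [P Q R] eqn:ET. simpl in *.
    assert (CQL : closeB Q L (3 * D)).
    { replace (3 * D) with (D + 2 * D) by ring. eapply closeB_trans. apply closeB_sym. exact SPQ. exact CPL. }
    assert (CRL : closeB R L (3 * D)).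
    { replace (3 * D) with (D + 2 * D) by ring. eapply closeB_trans. exact SRP. exact CPL. }
    assert (CPL' : closeB P L (3 * D)) by (eapply closeB_mono; [exact CPL| lra]).
    set (A := fun w => ((h p - d * p) + d * w)%C).
    assert (SA : forall x y, SegCont A x y) by (intros x y s _; apply Ccont_aff).
    assert (Edge : forall X Y, goodB X -> goodB Y -> seg h (ptB a b c X) (ptB a b c Y) =
                 (seg (fun w => h w - A w) (ptB a b c X) (ptB a b c Y) + seg A (ptB a b c X) (ptB a b c Y))%C).
    { intros X Y GX GY. rewrite seg_minus. ring. apply segcont_good; auto. apply SA. }
    assert (TA : (seg A (ptB a b c P) (ptB a b c Q) + seg A (ptB a b c Q) (ptB a b c R) + seg A (ptB a b c R) (ptB a b c P))%C = 0%C).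
    { unfold A. rewrite !seg_aff. cring. }
    pose proof (triseq_big h a b c n H) as Big. fold T in Big. rewrite ET in Big.
    set (T0 := TI h a b c tri0) in *.
    unfold TI in Big; simpl in Big.
    rewrite (Edge P Q GP GQ), (Edge Q R GQ GR), (Edge R P GR GP) in Big.
    replace (seg (fun w => h w - A w) (ptB a b c P) (ptB a b c Q) + seg A (ptB a b c P) (ptB a b c Q) +
      (seg (fun w => h w - A w) (ptB a b c Q) (ptB a b c R) + seg A (ptB a b c Q) (ptB a b c R)) +
      (seg (fun w => h w - A w) (ptB a b c R) (ptB a b c P) + seg A (ptB a b c R) (ptB a b c P)))%C
      with (seg (fun w => h w - A w) (ptB a b c P) (ptB a b c Q) + seg (fun w => h w - A w) (ptB a b c Q) (ptB a b c R) +
            seg (fun w => h w - A w) (ptB a b c R) (ptB a b c P) +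
            (seg A (ptB a b c P) (ptB a b c Q) + seg A (ptB a b c Q) (ptB a b c R) + seg A (ptB a b c R) (ptB a b c P)))%C in Big by ring.
    rewrite TA, Cplus_0_r in Big.
    assert (B1 := edge_bound h a b c p d eps del P Q L D Kd eq_refl (segcont_good h a b c _ _ H GP GQ) SPQ CPL' (Rlt_le _ _ HD) He HDK).
    assert (B2 := edge_bound h a b c p d eps del Q R L D Kd eq_refl (segcont_good h a b c _ _ H GQ GR) SQR CQL (Rlt_le _ _ HD) He HDK).
    assert (B3 := edge_bound h a b c p d eps del R P L D Kd eq_refl (segcont_good h a b c _ _ H GR GP) SRP CRL (Rlt_le _ _ HD) He HDK).
    fold K in B1, B2, B3. unfold A in Big.
    set (s1 := seg (fun w => h w - (h p - d * p + d * w))%C (ptB a b c P) (ptB a b c Q)) in *.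
    set (s2 := seg (fun w => h w - (h p - d * p + d * w))%C (ptB a b c Q) (ptB a b c R)) in *.
    set (s3 := seg (fun w => h w - (h p - d * p + d * w))%C (ptB a b c R) (ptB a b c P)) in *.
    pose proof (Cmod_triangle (s1 + s2) s3). pose proof (Cmod_triangle s1 s2).
    assert (E4 : (1/4)^n = D * D) by (unfold D; rewrite <- Rpow_mult_distr; f_equal; field).
    rewrite E4 in Big.
    assert (Cmod (s1 + s2 + s3) <= 3 * (D * K * (eps * (4 * D * K)))) by lra.
    replace (3 * (D * K * (eps * (4 * D * K)))) with ((12 * K * K * eps) * (D * D)) in H2 by ring.
    assert (Cmod T0 * (D * D) <= (12 * K * K * eps) * (D * D)) by lra.
    apply Rmult_le_reg_r in H3. exact H3. nra. }
  destruct (Req_dec K 0) as [K0|K0].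
  - specialize (Hb 1 Rlt_0_1). rewrite K0 in Hb. lra.
  - apply Rle_plus_epsilon. intros eps He. rewrite Rplus_0_l.
    replace eps with (12 * K * K * (eps / (12 * K * K))) by (field; auto).
    apply Hb. apply Rdiv_lt_0_compat. auto. assert (0 < K) by lra. nra.
Qed.

Theorem goursat h a b c :
  (forall al be ga : R, 0 <= al -> 0 <= be -> 0 <= ga -> al + be + ga = 1 ->
     exists d, CD h (RtoC al * a + RtoC be * b + RtoC ga * c)%C d) ->
  (seg h a b + seg h b c + seg h c a)%C = RtoC 0.
Proof.
  intros H.
  assert (HG : HypG h a b c).
  { intros P [? [? [? ?]]]. apply H; auto. }
  pose proof (goursat_tri h a b c HG) as E. unfold TI, tri0 in E; simpl in E.
  assert (Ea : ptB a b c (mkB 1 0 0) = a) by (unfold ptB; simpl; cring).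
  assert (Eb : ptB a b c (mkB 0 1 0) = b) by (unfold ptB; simpl; cring).
  assert (Ec : ptB a b c (mkB 0 0 1) = c) by (unfold ptB; simpl; cring).
  rewrite Ea, Eb, Ec in E. exact E.
Qed.


Open Scope R_scope.

Lemma Cmod_comb (a b : C) (s : R) : 0 <= s <= 1 ->
  Cmod (a + RtoC s * (b - a))%C <= (1 - s) * Cmod a + s * Cmod b.
Proof.
  intros Hs. replace (a + RtoC s * (b - a))%C with (RtoC (1 - s) * a + RtoC s * b)%C by cring.
  eapply Rle_trans. apply Cmod_triangle. rewrite !Cmod_RtoC_mult.
  rewrite (Rabs_pos_eq (1 - s)) by lra. rewrite (Rabs_pos_eq s) by lra. lra.
Qed.

Lemma Cmod_comb_lt (a b : C) (s M : R) : 0 <= s <= 1 -> Cmod a < M -> Cmod b < M ->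
  Cmod (a + RtoC s * (b - a))%C < M.
Proof.
  intros Hs Ha Hb. eapply Rle_lt_trans. apply Cmod_comb; auto.
  assert ((1 - s) * Cmod a <= (1 - s) * M) by (apply Rmult_le_compat_l; lra).
  destruct (Rle_lt_or_eq_dec 0 s (proj1 Hs)) as [Hs0|Hs0].
  - assert (s * Cmod b < s * M) by (apply Rmult_lt_compat_l; lra). lra.
  - subst s. lra.
Qed.

Lemma conv3 al be ga x y w : 0 <= al -> 0 <= be -> 0 <= ga -> al + be + ga = 1 ->
  x < 1 -> y < 1 -> w < 1 -> al * x + be * y + ga * w < 1.
Proof.
  intros. assert (al * x <= al * 1) by (apply Rmult_le_compat_l; lra).
  assert (be * y <= be * 1) by (apply Rmult_le_compat_l; lra).
  assert (ga * w <= ga * 1) by (apply Rmult_le_compat_l; lra).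
  destruct (Rle_lt_or_eq_dec 0 al H) as [Ha|Ha].
  - assert (al * x < al * 1) by (apply Rmult_lt_compat_l; lra). lra.
  - destruct (Rle_lt_or_eq_dec 0 be H0) as [Hb|Hb].
    + assert (be * y < be * 1) by (apply Rmult_lt_compat_l; lra). lra.
    + assert (ga * w < ga * 1) by (apply Rmult_lt_compat_l; lra). lra.
Qed.

Definition in_D (z : C) : Prop := Cmod z < 1.

Lemma segcont_disk h a b : (forall z, in_D z -> Ccont h z) -> in_D a -> in_D b -> SegCont h a b.
Proof.
  intros H Ha Hb s Hs. apply H. unfold in_D in *. apply Cmod_comb_lt; auto.
Qed.

Lemma comb_nz (z z' : C) (s ga : R) : z <> RtoC 0 -> Cmod (z' - z)%C < Cmod z -> 0 <= s -> 0 <= ga -> 0 < s + ga ->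
  (RtoC s * z + RtoC ga * z')%C <> RtoC 0.
Proof.
  intros Hz Hzz Hs Hg Hsg E.
  assert (Hm : 0 < Cmod z) by (apply Cmod_gt_0; auto).
  assert (E2 : (RtoC (s + ga) * z)%C = (- (RtoC ga * (z' - z)))%C).
  { replace (RtoC (s + ga) * z)%C with ((RtoC s * z + RtoC ga * z') - RtoC ga * (z' - z))%C by cring.
    rewrite E. cring. }
  apply (f_equal Cmod) in E2. rewrite Cmod_opp, !Cmod_RtoC_mult in E2.
  rewrite (Rabs_pos_eq (s + ga)) in E2 by lra. rewrite (Rabs_pos_eq ga) in E2 by lra.
  pose proof (Cmod_ge_0 (z' - z)%C). nra.
Qed.

Lemma seg_zero h (a : C) : seg h a a = RtoC 0.
Proof.
  unfold seg, Fs. transitivity (@RInt C_R_CompleteNormedModule (fun _ => RtoC 0) 0 1).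
  apply (@RInt_ext C_R_CompleteNormedModule). intros x _. cring.
  rewrite (@RInt_const C_R_CompleteNormedModule). rewrite scal_R_Cmult. cring.
Qed.

Lemma h_bound0 h : Ccont h (RtoC 0) -> exists rho M, 0 < rho /\ 0 <= M /\
  forall w, Cmod w < rho -> Cmod (h w) <= M.
Proof.
  intros H. destruct (H 1 Rlt_0_1) as [rho [Hr K]].
  exists rho, (Cmod (h (RtoC 0)) + 1). split. auto. split. pose proof (Cmod_ge_0 (h (RtoC 0))). lra.
  intros w Hw. assert (Cmod (w - RtoC 0)%C < rho). { replace (w - RtoC 0)%C with w by cring. auto. }
  specialize (K w H0). pose proof (Cmod_triangle (h w - h (RtoC 0))%C (h (RtoC 0))).
  replace (h w - h (RtoC 0) + h (RtoC 0))%C with (h w) in H1 by ring. lra.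
Qed.

Lemma triangle_zero h z z' :
  (forall w, in_D w -> Ccont h w) ->
  (forall w, in_D w -> w <> RtoC 0 -> exists d, CD h w d) ->
  in_D z -> in_D z' -> z <> RtoC 0 -> Cmod (z' - z)%C < Cmod z ->
  (seg h (RtoC 0) z + seg h z z' + seg h z' (RtoC 0))%C = RtoC 0.
Proof.
  intros Hc Hd Hz Hz' Hz0 Hzz.
  assert (H0 : in_D (RtoC 0)) by (unfold in_D; rewrite Cmod_0; lra).
  assert (Hm : 0 < Cmod z) by (apply Cmod_gt_0; auto).
  assert (Key : forall ep, 0 < ep <= 1 ->
     (seg h (RtoC 0) z + seg h z z' + seg h z' (RtoC 0))%C =
     (seg h (RtoC 0) (RtoC ep * z) + seg h (RtoC ep * z) (RtoC ep * z') + seg h (RtoC ep * z') (RtoC 0))%C).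
  { intros ep Hep.
    assert (Dez : in_D (RtoC ep * z)%C).
    { unfold in_D in *. rewrite Cmod_RtoC_mult, Rabs_pos_eq by lra. pose proof (Cmod_ge_0 z). nra. }
    assert (Dez' : in_D (RtoC ep * z')%C).
    { unfold in_D in *. rewrite Cmod_RtoC_mult, Rabs_pos_eq by lra. pose proof (Cmod_ge_0 z'). nra. }
    assert (S1 := seg_split h (RtoC 0) z ep (segcont_disk h _ _ Hc H0 Hz) ltac:(lra)).
    replace (RtoC 0 + RtoC ep * (z - RtoC 0))%C with (RtoC ep * z)%C in S1 by cring.
    assert (S2 := seg_split h z' (RtoC 0) (1 - ep) (segcont_disk h _ _ Hc Hz' H0) ltac:(lra)).
    replace (z' + RtoC (1 - ep) * (RtoC 0 - z'))%C with (RtoC ep * z')%C in S2 by cring.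
    assert (T1 : (seg h (RtoC ep * z) z + seg h z z' + seg h z' (RtoC ep * z))%C = RtoC 0).
    { apply goursat. intros al be ga Hal Hbe Hga Hs.
      set (w := (RtoC al * (RtoC ep * z) + RtoC be * z + RtoC ga * z')%C).
      apply Hd.
      - unfold w, in_D in *.
        replace (RtoC al * (RtoC ep * z) + RtoC be * z + RtoC ga * z')%C with
          (RtoC (al * ep) * z + RtoC be * z + RtoC ga * z')%C by cring.
        eapply Rle_lt_trans. apply Cmod_triangle. eapply Rle_lt_trans. apply Rplus_le_compat_r. apply Cmod_triangle.
        rewrite !Cmod_RtoC_mult. rewrite !Rabs_pos_eq by nra.
        pose proof (Cmod_ge_0 z). pose proof (Cmod_ge_0 z').
        assert (al * ep * Cmod z <= al * Cmod z) by (rewrite Rmult_assoc; apply Rmult_le_compat_l; nra).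
        pose proof (conv3 al be ga (Cmod z) (Cmod z) (Cmod z') Hal Hbe Hga Hs Hz Hz Hz'). lra.
      - unfold w. replace (RtoC al * (RtoC ep * z) + RtoC be * z + RtoC ga * z')%C with
          (RtoC (al * ep + be) * z + RtoC ga * z')%C by cring.
        apply comb_nz; auto; nra. }
    assert (T2 : (seg h (RtoC ep * z) z' + seg h z' (RtoC ep * z') + seg h (RtoC ep * z') (RtoC ep * z))%C = RtoC 0).
    { apply goursat. intros al be ga Hal Hbe Hga Hs.
      apply Hd.
      - unfold in_D in *.
        replace (RtoC al * (RtoC ep * z) + RtoC be * z' + RtoC ga * (RtoC ep * z'))%C with
          (RtoC (al * ep) * z + RtoC be * z' + RtoC (ga * ep) * z')%C by cring.
        eapply Rle_lt_trans. apply Cmod_triangle. eapply Rle_lt_trans. apply Rplus_le_compat_r. apply Cmod_triangle.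
        rewrite !Cmod_RtoC_mult. rewrite !Rabs_pos_eq by nra.
        pose proof (Cmod_ge_0 z). pose proof (Cmod_ge_0 z').
        assert (al * ep * Cmod z <= al * Cmod z) by (rewrite Rmult_assoc; apply Rmult_le_compat_l; nra).
        assert (ga * ep * Cmod z' <= ga * Cmod z') by (rewrite Rmult_assoc; apply Rmult_le_compat_l; nra).
        pose proof (conv3 al be ga (Cmod z) (Cmod z') (Cmod z') Hal Hbe Hga Hs Hz Hz' Hz'). lra.
      - replace (RtoC al * (RtoC ep * z) + RtoC be * z' + RtoC ga * (RtoC ep * z'))%C with
          (RtoC (al * ep) * z + RtoC (be + ga * ep) * z')%C by cring.
        apply comb_nz; auto; nra. }
    rewrite (seg_rev h _ _ (segcont_disk h _ _ Hc Dez Hz')) in T1.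
    rewrite (seg_rev h _ _ (segcont_disk h _ _ Hc Dez Dez')) in T2.
    rewrite S1, S2.
    match goal with | T1 : ?t1 = _, T2 : ?t2 = _ |- ?L = ?R =>
      apply Ceq_minus; replace (L - R)%C with (t1 + t2)%C by ring; rewrite T1, T2; cring end. }
  destruct (h_bound0 h (Hc _ H0)) as [rho [M [Hrho [HM HhM]]]].
  set (S := (seg h (RtoC 0) z + seg h z z' + seg h z' (RtoC 0))%C) in *.
  set (Kz := Cmod z + Cmod z' + 1).
  assert (HKz : 0 < Kz) by (unfold Kz; pose proof (Cmod_ge_0 z); pose proof (Cmod_ge_0 z'); lra).
  assert (Bnd : forall ep, 0 < ep <= 1 -> ep * Kz < rho -> Cmod S <= 3 * (ep * Kz * M)).
  { intros ep Hep Hek. rewrite (Key ep Hep).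
    assert (Pz : Cmod (RtoC ep * z)%C < rho).
    { rewrite Cmod_RtoC_mult, Rabs_pos_eq by lra. unfold Kz in Hek. pose proof (Cmod_ge_0 z'). nra. }
    assert (Pz' : Cmod (RtoC ep * z')%C < rho).
    { rewrite Cmod_RtoC_mult, Rabs_pos_eq by lra. unfold Kz in Hek. pose proof (Cmod_ge_0 z). nra. }
    assert (P0 : Cmod (RtoC 0) < rho) by (rewrite Cmod_0; lra).
    assert (Sb : forall x y, Cmod x < rho -> Cmod y < rho -> in_D x -> in_D y -> Cmod (y - x)%C <= ep * Kz ->
              Cmod (seg h x y) <= ep * Kz * M).
    { intros x y Hx Hy Dx Dy Hxy. eapply Rle_trans. apply (seg_bound h x y M).
      apply segcont_disk; auto. intros s Hs. apply HhM. apply Cmod_comb_lt; auto.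
      apply Rmult_le_compat_r; auto. }
    assert (Dez : in_D (RtoC ep * z)%C).
    { unfold in_D in *. rewrite Cmod_RtoC_mult, Rabs_pos_eq by lra. pose proof (Cmod_ge_0 z). nra. }
    assert (Dez' : in_D (RtoC ep * z')%C).
    { unfold in_D in *. rewrite Cmod_RtoC_mult, Rabs_pos_eq by lra. pose proof (Cmod_ge_0 z'). nra. }
    pose proof (Cmod_ge_0 z). pose proof (Cmod_ge_0 z'). pose proof (Cmod_ge_0 (z' - z)%C).
    assert (B1 : Cmod (seg h (RtoC 0) (RtoC ep * z)) <= ep * Kz * M).
    { apply Sb; auto. replace (RtoC ep * z - RtoC 0)%C with (RtoC ep * z)%C by cring.
      rewrite Cmod_RtoC_mult, Rabs_pos_eq by lra. unfold Kz. nra. }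
    assert (B2 : Cmod (seg h (RtoC ep * z) (RtoC ep * z')) <= ep * Kz * M).
    { apply Sb; auto. replace (RtoC ep * z' - RtoC ep * z)%C with (RtoC ep * (z' - z))%C by cring.
      rewrite Cmod_RtoC_mult, Rabs_pos_eq by lra. unfold Kz. nra. }
    assert (B3 : Cmod (seg h (RtoC ep * z') (RtoC 0)) <= ep * Kz * M).
    { apply Sb; auto. replace (RtoC 0 - RtoC ep * z')%C with (- (RtoC ep * z'))%C by cring.
      rewrite Cmod_opp, Cmod_RtoC_mult, Rabs_pos_eq by lra. unfold Kz. nra. }
    eapply Rle_trans. apply Cmod_triangle. eapply Rle_trans. apply Rplus_le_compat_r. apply Cmod_triangle. lra. }
  apply Cmod_eq_0. apply Rle_antisym. 2: apply Cmod_ge_0.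
  apply Rle_plus_epsilon. intros eps Heps. rewrite Rplus_0_l.
  set (ep := Rmin 1 (Rmin (rho / (2 * Kz)) (eps / (3 * Kz * (M + 1))))).
  assert (Hep1 : 0 < ep).
  { unfold ep. apply Rmin_pos. lra. apply Rmin_pos; apply Rdiv_lt_0_compat; auto; nra. }
  assert (Hep2 : ep <= 1) by apply Rmin_l.
  assert (Hep3 : ep <= rho / (2 * Kz)) by (eapply Rle_trans; [apply Rmin_r|apply Rmin_l]).
  assert (Hep4 : ep <= eps / (3 * Kz * (M + 1))) by (eapply Rle_trans; [apply Rmin_r|apply Rmin_r]).
  assert (ep * Kz < rho).
  { apply (Rmult_le_compat_r (2 * Kz)) in Hep3; [|lra].
    replace (rho / (2 * Kz) * (2 * Kz)) with rho in Hep3 by (field; lra). nra. }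
  specialize (Bnd ep ltac:(lra) H).
  assert (ep * (3 * Kz * (M + 1)) <= eps).
  { apply (Rmult_le_compat_r (3 * Kz * (M + 1))) in Hep4; [|nra].
    replace (eps / (3 * Kz * (M + 1)) * (3 * Kz * (M + 1))) with eps in Hep4 by (field; nra). lra. }
  assert (3 * (ep * Kz * M) <= ep * (3 * Kz * (M + 1))) by nra. lra.
Qed.

Theorem prim_CD h :
  (forall w, in_D w -> Ccont h w) ->
  (forall w, in_D w -> w <> RtoC 0 -> exists d, CD h w d) ->
  forall z, in_D z -> CD (fun w => seg h (RtoC 0) w) z (h z).
Proof.
  intros Hc Hd z Hz eps Heps.
  destruct (Hc z Hz eps Heps) as [d1 [Hd1 K1]].
  assert (H0 : in_D (RtoC 0)) by (unfold in_D; rewrite Cmod_0; lra).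
  assert (Diff : exists del, 0 < del /\ forall w, Cmod (w - z)%C < del ->
     in_D w /\ (seg h (RtoC 0) w - seg h (RtoC 0) z)%C = seg h z w).
  { destruct (Ceq_dec z (RtoC 0)) as [Z|Z].
    - subst z. exists 1. split. lra. intros w Hw.
      replace (w - RtoC 0)%C with w in Hw by cring.
      split. exact Hw. rewrite seg_zero. ring.
    - assert (Hm : 0 < Cmod z) by (apply Cmod_gt_0; auto).
      exists (Rmin (Cmod z) (1 - Cmod z)). split. apply Rmin_pos; unfold in_D in Hz; lra.
      intros w Hw.
      assert (Hw1 : Cmod (w - z)%C < Cmod z) by (eapply Rlt_le_trans; [exact Hw|apply Rmin_l]).
      assert (Hw2 : Cmod (w - z)%C < 1 - Cmod z) by (eapply Rlt_le_trans; [exact Hw|apply Rmin_r]).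
      assert (Dw : in_D w).
      { unfold in_D. pose proof (Cmod_triangle (w - z) z). replace (w - z + z)%C with w in H by ring. lra. }
      split. exact Dw.
      pose proof (triangle_zero h z w Hc Hd Hz Dw Z Hw1) as T.
      rewrite (seg_rev h (RtoC 0) w (segcont_disk h _ _ Hc H0 Dw)) in T.
      apply Ceq_minus in T. apply Ceq_minus. rewrite <- T. ring. }
  destruct Diff as [d2 [Hd2 K2]].
  exists (Rmin d1 d2). split. apply Rmin_pos; auto.
  intros w Hw.
  assert (Hw1 : Cmod (w - z)%C < d1) by (eapply Rlt_le_trans; [exact Hw|apply Rmin_l]).
  assert (Hw2 : Cmod (w - z)%C < d2) by (eapply Rlt_le_trans; [exact Hw|apply Rmin_r]).
  destruct (K2 w Hw2) as [Dw E]. rewrite E.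
  assert (Ec : seg (fun _ => h z) z w = (h z * (w - z))%C).
  { pose proof (seg_aff (h z) (RtoC 0) z w) as S.
    assert (seg (fun _ => h z) z w = seg (fun u => h z + RtoC 0 * u)%C z w).
    { unfold seg, Fs. apply (@RInt_ext C_R_CompleteNormedModule). intros x _. cring. }
    rewrite H, S. ring. }
  rewrite <- Ec. rewrite <- seg_minus.
  2: apply segcont_disk; auto.
  2: { intros s _ e He. exists 1. split. lra. intros. replace (h z - h z)%C with (RtoC 0) by ring. rewrite Cmod_0. auto. }
  rewrite Rmult_comm. apply seg_bound.
  - apply segcont_minus. apply segcont_disk; auto. intros s _ e He. exists 1. split. lra. intros. replace (h z - h z)%C with (RtoC 0) by ring. rewrite Cmod_0. auto.
  - intros s Hs. left. apply K1.
    replace (z + RtoC s * (w - z) - z)%C with (RtoC s * (w - z))%C by ring.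
    rewrite Cmod_RtoC_mult, Rabs_pos_eq by lra. pose proof (Cmod_ge_0 (w - z)%C). nra.
Qed.


Open Scope R_scope.

Lemma dpl_eq f x y a b a' b' : differentiable_pt_lim f x y a b -> a = a' -> b = b' -> differentiable_pt_lim f x y a' b'.
Proof. intros H <- <-. exact H. Qed.

Lemma dpl_mult2 a0 b0 : differentiable_pt_lim (fun a b => a * b) a0 b0 b0 a0.
Proof.
  apply filterdiff_differentiable_pt_lim.
  eapply filterdiff_ext_lin.
  apply (@filterdiff_mult R_AbsRing (locally (a0, b0)) _ (a0, b0)).
  intros P HP. exact HP.
  intros; apply Rmult_comm.
  intros [u v]. simpl. unfold plus, mult; simpl. ring.
Qed.

Lemma dpl_plus2 a0 b0 : differentiable_pt_lim (fun a b => a + b) a0 b0 1 1.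
Proof.
  apply filterdiff_differentiable_pt_lim.
  eapply filterdiff_ext_lin.
  apply (@filterdiff_plus R_AbsRing R_NormedModule (locally (a0, b0))).
  intros [u v]. simpl. unfold plus; simpl. ring.
Qed.

Lemma dpl_proj1 x y : differentiable_pt_lim (fun u v => u) x y 1 0.
Proof.
  intros eps. exists (mkposreal 1 Rlt_0_1). intros u v _ _.
  replace (u - x - (1 * (u - x) + 0 * (v - y))) with 0 by ring. rewrite Rabs_R0.
  apply Rmult_le_pos. left; apply cond_pos. eapply Rle_trans. apply Rabs_pos. apply Rmax_l.
Qed.

Lemma dpl_proj2 x y : differentiable_pt_lim (fun u v => v) x y 0 1.
Proof.
  intros eps. exists (mkposreal 1 Rlt_0_1). intros u v _ _.
  replace (v - y - (0 * (u - x) + 1 * (v - y))) with 0 by ring. rewrite Rabs_R0.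
  apply Rmult_le_pos. left; apply cond_pos. eapply Rle_trans. apply Rabs_pos. apply Rmax_l.
Qed.

Lemma dpl_const c x y : differentiable_pt_lim (fun u v => c) x y 0 0.
Proof.
  intros eps. exists (mkposreal 1 Rlt_0_1). intros u v _ _.
  replace (c - c - (0 * (u - x) + 0 * (v - y))) with 0 by ring. rewrite Rabs_R0.
  apply Rmult_le_pos. left; apply cond_pos. eapply Rle_trans. apply Rabs_pos. apply Rmax_l.
Qed.

Lemma dpl_mult f g x y fx fy gx gy :
  differentiable_pt_lim f x y fx fy -> differentiable_pt_lim g x y gx gy ->
  differentiable_pt_lim (fun u v => f u v * g u v) x y (g x y * fx + f x y * gx) (g x y * fy + f x y * gy).
Proof. intros Hf Hg. exact (differentiable_pt_lim_comp _ f g x y _ _ _ _ _ _ (dpl_mult2 _ _) Hf Hg). Qed.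

Lemma dpl_plus f g x y fx fy gx gy :
  differentiable_pt_lim f x y fx fy -> differentiable_pt_lim g x y gx gy ->
  differentiable_pt_lim (fun u v => f u v + g u v) x y (1 * fx + 1 * gx) (1 * fy + 1 * gy).
Proof. intros Hf Hg. exact (differentiable_pt_lim_comp _ f g x y _ _ _ _ _ _ (dpl_plus2 _ _) Hf Hg). Qed.

Lemma dpl_comp1 (phi : R -> R) f x y d fx fy :
  derivable_pt_lim phi (f x y) d -> differentiable_pt_lim f x y fx fy ->
  differentiable_pt_lim (fun u v => phi (f u v)) x y (d * fx + 0 * fx) (d * fy + 0 * fy).
Proof.
  intros Hp Hf.
  exact (differentiable_pt_lim_comp (fun a _ => phi a) f f x y _ _ _ _ _ _ (differentiable_pt_lim_proj1_0 phi _ _ _ Hp) Hf Hf).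
Qed.

Lemma CR_CD (F : C -> C) x y ux uy vx vy :
  differentiable_pt_lim (fun u v => fst (F (u, v))) x y ux uy ->
  differentiable_pt_lim (fun u v => snd (F (u, v))) x y vx vy ->
  vy = ux -> uy = - vx -> CD F (x, y) (ux, vx).
Proof.
  intros HU HV E1 E2 eps Heps.
  assert (He2 : 0 < eps / 2) by lra.
  destruct (HU (mkposreal _ He2)) as [d1 K1]. destruct (HV (mkposreal _ He2)) as [d2 K2].
  exists (Rmin d1 d2). split. apply Rmin_pos; apply cond_pos.
  intros [u v] Hw.
  pose proof (Rmax_Cmod ((u, v) - (x, y))%C) as Hm. simpl in Hm.
  replace (u + - x) with (u - x) in Hm by ring. replace (v + - y) with (v - y) in Hm by ring.
  assert (Hu : Rabs (u - x) < d1).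
  { eapply Rle_lt_trans. eapply Rle_trans. apply Rmax_l. exact Hm. eapply Rlt_le_trans. exact Hw. apply Rmin_l. }
  assert (Hv : Rabs (v - y) < d1).
  { eapply Rle_lt_trans. eapply Rle_trans. apply Rmax_r. exact Hm. eapply Rlt_le_trans. exact Hw. apply Rmin_l. }
  assert (Hu' : Rabs (u - x) < d2).
  { eapply Rle_lt_trans. eapply Rle_trans. apply Rmax_l. exact Hm. eapply Rlt_le_trans. exact Hw. apply Rmin_r. }
  assert (Hv' : Rabs (v - y) < d2).
  { eapply Rle_lt_trans. eapply Rle_trans. apply Rmax_r. exact Hm. eapply Rlt_le_trans. exact Hw. apply Rmin_r. }
  specialize (K1 u v Hu Hv). specialize (K2 u v Hu' Hv'). simpl in K1, K2.
  eapply Rle_trans. apply Cmod_le_abs.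
  simpl.
  replace (fst (F (u, v)) + - fst (F (x, y)) + - (ux * (u + - x) - vx * (v + - y)))
    with (fst (F (u, v)) - fst (F (x, y)) - (ux * (u - x) + uy * (v - y))) by (rewrite E2; ring).
  replace (snd (F (u, v)) + - snd (F (x, y)) + - (ux * (v + - y) + vx * (u + - x)))
    with (snd (F (u, v)) - snd (F (x, y)) - (vx * (u - x) + vy * (v - y))) by (rewrite E1; ring).
  replace (eps * Cmod ((u, v) - (x, y))%C) with (eps / 2 * Cmod ((u, v) - (x, y))%C + eps / 2 * Cmod ((u, v) - (x, y))%C) by field.
  apply Rplus_le_compat.
  - eapply Rle_trans. exact K1. apply Rmult_le_compat_l. lra. exact Hm.
  - eapply Rle_trans. exact K2. apply Rmult_le_compat_l. lra. exact Hm.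
Qed.

Definition Eb (be a : R) : R := exp (be * ln (sqrt a)).
Definition Cb (be t : R) : R := cos (be * atan t).
Definition Sb (be t : R) : R := sin (be * atan t).
Definition P1 (u : R) : R := (1 - u) * (1 - u).
Definition P2 (v : R) : R := v * v.
Definition N1 (v : R) : R := - v.
Definition I1 (u : R) : R := / (1 - u).
Definition Aq (u v : R) : R := P1 u + P2 v.
Definition Tq (u v : R) : R := N1 v * I1 u.

Lemma d_Eb be a : 0 < a -> derivable_pt_lim (Eb be) a (Eb be a * be / (2 * a)).
Proof.
  intros Ha. unfold Eb. apply is_derive_Reals. auto_derive.
  - repeat split; auto. apply sqrt_lt_R0; auto.
  - pose proof (sqrt_lt_R0 a Ha). pose proof (sqrt_sqrt a (Rlt_le _ _ Ha)).
    replace (2 * a) with (2 * (sqrt a * sqrt a)) by (rewrite H0; ring). field. lra.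
Qed.

Lemma d_Cb be t : derivable_pt_lim (Cb be) t (- Sb be t * (be / (1 + t * t))).
Proof.
  unfold Cb, Sb. apply is_derive_Reals. auto_derive. trivial.
  assert (0 < 1 + t * t) by nra. field. lra.
Qed.

Lemma d_Sb be t : derivable_pt_lim (Sb be) t (Cb be t * (be / (1 + t * t))).
Proof.
  unfold Cb, Sb. apply is_derive_Reals. auto_derive. trivial.
  assert (0 < 1 + t * t) by nra. field. lra.
Qed.

Lemma d_P1 u : derivable_pt_lim P1 u (-2 * (1 - u)).
Proof. unfold P1. apply is_derive_Reals. auto_derive. trivial. ring. Qed.

Lemma d_P2 v : derivable_pt_lim P2 v (2 * v).
Proof. unfold P2. apply is_derive_Reals. auto_derive. trivial. ring. Qed.

Lemma d_N1 v : derivable_pt_lim N1 v (-1).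
Proof. unfold N1. apply is_derive_Reals. auto_derive. trivial. ring. Qed.

Lemma d_I1 u : u < 1 -> derivable_pt_lim I1 u (/ ((1 - u) * (1 - u))).
Proof. intros H. unfold I1. apply is_derive_Reals. auto_derive. lra. field. lra. Qed.

Lemma dpl_Aq x y : differentiable_pt_lim Aq x y (-2 * (1 - x)) (2 * y).
Proof.
  eapply dpl_eq. unfold Aq.
  apply (dpl_plus (fun u v => P1 u) (fun u v => P2 v)).
  apply (dpl_comp1 P1 (fun u v => u)). apply d_P1. apply dpl_proj1.
  apply (dpl_comp1 P2 (fun u v => v)). apply d_P2. apply dpl_proj2.
  ring. ring.
Qed.

Lemma dpl_Tq x y : x < 1 -> differentiable_pt_lim Tq x y (- y / ((1 - x) * (1 - x))) (- / (1 - x)).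
Proof.
  intros Hx. eapply dpl_eq. unfold Tq.
  apply (dpl_mult (fun u v => N1 v) (fun u v => I1 u)).
  apply (dpl_comp1 N1 (fun u v => v)). apply d_N1. apply dpl_proj2.
  apply (dpl_comp1 I1 (fun u v => u)). apply d_I1. auto. apply dpl_proj1.
  unfold I1, N1. field. lra. unfold I1, N1. field. lra.
Qed.

Definition NU be u v := Eb be (Aq u v) * Cb be (Tq u v).
Definition NV be u v := Eb be (Aq u v) * Sb be (Tq u v).

Lemma Aq_pos x y : x < 1 -> 0 < Aq x y.
Proof. intros. unfold Aq, P1, P2. nra. Qed.

Lemma Tq_sq x y : x < 1 -> 1 + Tq x y * Tq x y = Aq x y / ((1 - x) * (1 - x)).
Proof. intros. unfold Tq, Aq, N1, I1, P1, P2. field. lra. Qed.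

Lemma dpl_NU be x y : x < 1 ->
  differentiable_pt_lim (NU be) x y
    (- Eb be (Aq x y) * be * ((1 - x) * Cb be (Tq x y) - y * Sb be (Tq x y)) / Aq x y)
    (Eb be (Aq x y) * be * (y * Cb be (Tq x y) + (1 - x) * Sb be (Tq x y)) / Aq x y).
Proof.
  intros Hx. pose proof (Aq_pos x y Hx) as HA. pose proof (Tq_sq x y Hx) as HT.
  assert (HT' : 0 < 1 + Tq x y * Tq x y) by nra.
  eapply dpl_eq. unfold NU.
  apply (dpl_mult (fun u v => Eb be (Aq u v)) (fun u v => Cb be (Tq u v))).
  apply (dpl_comp1 (Eb be) Aq). apply d_Eb. auto. apply dpl_Aq.
  apply (dpl_comp1 (Cb be) Tq). apply d_Cb. apply dpl_Tq. auto.
  - rewrite HT. field. split. lra. lra.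
  - rewrite HT. field. split. lra. lra.
Qed.

Lemma dpl_NV be x y : x < 1 ->
  differentiable_pt_lim (NV be) x y
    (- Eb be (Aq x y) * be * ((1 - x) * Sb be (Tq x y) + y * Cb be (Tq x y)) / Aq x y)
    (- Eb be (Aq x y) * be * ((1 - x) * Cb be (Tq x y) - y * Sb be (Tq x y)) / Aq x y).
Proof.
  intros Hx. pose proof (Aq_pos x y Hx) as HA. pose proof (Tq_sq x y Hx) as HT.
  assert (HT' : 0 < 1 + Tq x y * Tq x y) by nra.
  eapply dpl_eq. unfold NV.
  apply (dpl_mult (fun u v => Eb be (Aq u v)) (fun u v => Sb be (Tq u v))).
  apply (dpl_comp1 (Eb be) Aq). apply d_Eb. auto. apply dpl_Aq.
  apply (dpl_comp1 (Sb be) Tq). apply d_Sb. apply dpl_Tq. auto.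
  - rewrite HT. field. split. lra. lra.
  - rewrite HT. field. split. lra. lra.
Qed.

Definition cfun (be : R) (w : C) : C := cpow_principal (Cminus (RtoC 1) w) be.

Lemma cfun_N be u v : u < 1 -> cfun be (u, v) = (NU be u v, NV be u v).
Proof.
  intros Hu. unfold cfun, cpow_principal, principal_arg, NU, NV, Eb, Cb, Sb, Aq, Tq, P1, P2, N1, I1, Cmod.
  simpl. destruct (Rlt_dec 0 (1 + - u)) as [_|F]; [|lra].
  replace ((0 + - v) / (1 + - u)) with (- v * / (1 - u)) by (field; lra).
  replace ((1 + - u) * ((1 + - u) * 1) + (0 + - v) * ((0 + - v) * 1)) with ((1 - u) * (1 - u) + v * v) by ring. reflexivity.
Qed.

Lemma CD_cfun be x y : x < 1 ->
  CD (cfun be) (x, y) (RtoC (- be) * cfun be (x, y) / (RtoC 1 - (x, y)))%C.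
Proof.
  intros Hx.
  assert (E : (RtoC (- be) * cfun be (x, y) / (RtoC 1 - (x, y)))%C =
     ((- Eb be (Aq x y) * be * ((1 - x) * Cb be (Tq x y) - y * Sb be (Tq x y)) / Aq x y),
      (- Eb be (Aq x y) * be * ((1 - x) * Sb be (Tq x y) + y * Cb be (Tq x y)) / Aq x y))).
  { rewrite cfun_N by auto. unfold NU, NV.
    pose proof (Aq_pos x y Hx) as HA. unfold Aq, P1, P2 in *.
    unfold Cdiv, Cinv, Cmult, Cminus, Cplus, Copp, RtoC. simpl.
    apply injective_projections; simpl; field; nra. }
  rewrite E.
  apply CR_CD with (uy := (Eb be (Aq x y) * be * (y * Cb be (Tq x y) + (1 - x) * Sb be (Tq x y)) / Aq x y))
                   (vy := (- Eb be (Aq x y) * be * ((1 - x) * Cb be (Tq x y) - y * Sb be (Tq x y)) / Aq x y)).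
  - eapply differentiable_pt_lim_ext. 2: apply (dpl_NU be x y Hx).
    exists (mkposreal (1 - x) ltac:(lra)). intros u v Hu _. simpl in Hu.
    rewrite cfun_N. reflexivity. apply Rabs_def2 in Hu. lra.
  - eapply differentiable_pt_lim_ext. 2: apply (dpl_NV be x y Hx).
    exists (mkposreal (1 - x) ltac:(lra)). intros u v Hu _. simpl in Hu.
    rewrite cfun_N. reflexivity. apply Rabs_def2 in Hu. lra.
  - reflexivity.
  - pose proof (Aq_pos x y Hx). field. lra.
Qed.


Open Scope R_scope.

Lemma Re_le_Cmod (c : C) : Re c <= Cmod c.
Proof. pose proof (re_le_Cmod c). apply Rabs_le_between in H. lra. Qed.

Lemma radial (q : C -> C) z0 D : CD q z0 D ->
  (forall w, Cmod w < Cmod z0 -> 0 < Re (q w)) -> Re (q z0) = 0 -> 0 < Cmod z0 ->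
  Re (z0 * D)%C <= 0.
Proof.
  intros Hd Hin Hq0 Hr. apply Rnot_lt_le. intros HK.
  set (r0 := Cmod z0) in *. set (K := Re (z0 * D)%C) in *.
  destruct (Hd (K / (2 * r0))) as [del [Hdel Kd]]. apply Rdiv_lt_0_compat; lra.
  set (eta := Rmin (1/2) (del / (2 * r0))).
  assert (He : 0 < eta) by (apply Rmin_pos; [lra| apply Rdiv_lt_0_compat; lra]).
  assert (He1 : eta <= 1/2) by apply Rmin_l.
  assert (He2 : eta <= del / (2 * r0)) by apply Rmin_r.
  set (w := (RtoC (1 - eta) * z0)%C).
  assert (Ew : (w - z0)%C = (RtoC (- eta) * z0)%C) by (unfold w; cring).
  assert (Hmw : Cmod (w - z0)%C = eta * r0).
  { rewrite Ew, Cmod_RtoC_mult, Rabs_left by lra. fold r0. ring. }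
  assert (Hwd : Cmod (w - z0)%C < del).
  { rewrite Hmw. apply (Rmult_le_compat_r (2 * r0)) in He2; [|lra].
    replace (del / (2 * r0) * (2 * r0)) with del in He2 by (field; lra). nra. }
  specialize (Kd w Hwd). rewrite Hmw in Kd.
  assert (Hw : Cmod w < r0).
  { unfold w. rewrite Cmod_RtoC_mult, Rabs_pos_eq by lra. fold r0. nra. }
  specialize (Hin w Hw).
  pose proof (Re_le_Cmod (q w - q z0 - D * (w - z0))%C) as HR.
  replace (Re (q w - q z0 - D * (w - z0))%C) with (Re (q w) - Re (q z0) + eta * K) in HR.
  2: { rewrite Ew. unfold K, Re, Im. simpl. ring. }
  assert (K / (2 * r0) * (eta * r0) = eta * K / 2) by (field; lra).
  nra.
Qed.

Lemma tangential (q : C -> C) z0 D : CD q z0 D ->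
  (forall w, Cmod w <= Cmod z0 -> 0 <= Re (q w)) -> Re (q z0) = 0 -> 0 < Cmod z0 ->
  Im (z0 * D)%C = 0.
Proof.
  intros Hd Hin Hq0 Hr.
  set (r0 := Cmod z0) in *. set (K := (z0 * D)%C) in *.
  destruct (Req_dec (Im K) 0) as [E|NE]; auto. exfalso.
  set (m := Rabs (Im K)).
  assert (Hm : 0 < m) by (apply Rabs_pos_lt; auto).
  set (sg := if Rlt_dec 0 (Im K) then 1 else -1).
  assert (Hsg : sg * Im K = m /\ sg * sg = 1).
  { unfold sg, m. destruct (Rlt_dec 0 (Im K)).
    - rewrite Rabs_pos_eq by lra. split; ring.
    - rewrite Rabs_left by lra. split; ring. }
  destruct (Hd (m / (4 * (r0 + 1)))) as [del [Hdel Kd]]. apply Rdiv_lt_0_compat; lra.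
  set (s := Rmin (1/2) (Rmin (del / (2 * r0 + 1)) (m / (4 * (Rabs (Re K) + 1))))).
  assert (Hs0 : 0 < s).
  { apply Rmin_pos. lra. apply Rmin_pos; apply Rdiv_lt_0_compat; try lra. pose proof (Rabs_pos (Re K)). lra. }
  assert (Hs1 : s <= 1/2) by apply Rmin_l.
  assert (Hs2 : s <= del / (2 * r0 + 1)) by (eapply Rle_trans; [apply Rmin_r|apply Rmin_l]).
  assert (Hs3 : s <= m / (4 * (Rabs (Re K) + 1))) by (eapply Rle_trans; [apply Rmin_r|apply Rmin_r]).
  set (tau := sg * s).
  assert (Ht2 : tau * tau = s * s) by (unfold tau; destruct Hsg as [_ H2]; nra).
  set (w := (z0 * ((1 - tau * tau)%R, tau))%C).
  assert (Ew : (w - z0)%C = (z0 * ((- (tau * tau))%R, tau))%C) by (unfold w; cring).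
  assert (Hsg1 : Rabs sg = 1).
  { unfold sg. destruct Rlt_dec; unfold Rabs; destruct Rcase_abs; lra. }
  assert (Htau : Rabs tau = s) by (unfold tau; rewrite Rabs_mult, Hsg1, Rabs_pos_eq; lra).
  assert (Hmu : Cmod (((- (tau * tau))%R, tau)) <= 2 * s).
  { eapply Rle_trans; [apply Cmod_le_abs|]. simpl. rewrite Rabs_Ropp, Ht2, Htau.
    rewrite Rabs_pos_eq by nra. nra. }
  assert (Hmw : Cmod (w - z0)%C <= r0 * (2 * s)).
  { rewrite Ew, Cmod_mult. fold r0. apply Rmult_le_compat_l. lra. auto. }
  assert (Hwd : Cmod (w - z0)%C < del).
  { eapply Rle_lt_trans. exact Hmw. apply (Rmult_le_compat_r (2 * r0 + 1)) in Hs2; [|lra].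
    replace (del / (2 * r0 + 1) * (2 * r0 + 1)) with del in Hs2 by (field; lra). nra. }
  assert (Hw : Cmod w <= r0).
  { unfold w. rewrite Cmod_mult. fold r0.
    assert (Cmod ((1 - tau * tau)%R, tau) <= 1).
    { unfold Cmod. simpl. apply Rle_trans with (sqrt 1). apply sqrt_le_1_alt.
      assert (0 <= tau * tau <= 1/4) by (rewrite Ht2; nra). replace (tau * (tau * 1)) with (tau * tau) by ring. set (tt := tau * tau) in *. nra. rewrite sqrt_1; lra. }
    pose proof (Cmod_ge_0 ((1 - tau * tau)%R, tau)). nra. }
  specialize (Hin w Hw). specialize (Kd w Hwd).
  pose proof (Re_le_Cmod (q w - q z0 - D * (w - z0))%C) as HR.
  replace (Re (q w - q z0 - D * (w - z0))%C) with (Re (q w) - Re (q z0) + tau * tau * Re K + tau * Im K) in HR.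
  2: { rewrite Ew. unfold K, Re, Im. simpl. ring. }
  assert (Htm : tau * Im K = s * m) by (unfold tau; destruct Hsg as [H1 _]; rewrite <- H1; ring).
  rewrite Ht2, Htm in HR.
  assert (Heps : m / (4 * (r0 + 1)) * Cmod (w - z0)%C <= m / (4 * (r0 + 1)) * (r0 * (2 * s))).
  { apply Rmult_le_compat_l. apply Rlt_le, Rdiv_lt_0_compat; lra. auto. }
  assert (m / (4 * (r0 + 1)) * (r0 * (2 * s)) <= s * m / 2).
  { replace (m / (4 * (r0 + 1)) * (r0 * (2 * s))) with (s * m / 2 * (r0 / (r0 + 1))) by (field; lra).
    assert (r0 / (r0 + 1) <= 1). { apply (Rmult_le_reg_r (r0 + 1)). lra. replace (r0 / (r0 + 1) * (r0 + 1)) with r0 by (field; lra). lra. }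
    assert (0 <= s * m / 2) by nra. nra. }
  assert (Hsk : s * s * Rabs (Re K) <= s * m / 4).
  { apply (Rmult_le_compat_r (4 * (Rabs (Re K) + 1))) in Hs3. 2: pose proof (Rabs_pos (Re K)); lra.
    replace (m / (4 * (Rabs (Re K) + 1)) * (4 * (Rabs (Re K) + 1))) with m in Hs3 by (field; pose proof (Rabs_pos (Re K)); lra).
    pose proof (Rabs_pos (Re K)). nra. }
  pose proof (Rle_abs (- Re K)). rewrite Rabs_Ropp in H0.
  assert (- (s * s * Re K) <= s * m / 4) by nra.
  nra.
Qed.

Lemma Re_cont_pos (q : C -> C) z : Ccont q z -> 0 < Re (q z) ->
  exists del, 0 < del /\ forall w, Cmod (w - z)%C < del -> 0 < Re (q w).
Proof.
  intros Hc Hp. destruct (Hc (Re (q z)) Hp) as [del [Hd K]]. exists del. split; auto.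
  intros w Hw. specialize (K w Hw). pose proof (re_le_Cmod (q w - q z)%C) as H.
  apply Rabs_le_between in H. unfold Re in *. simpl in H. lra.
Qed.

Lemma Re_cont_neg (q : C -> C) z : Ccont q z -> Re (q z) < 0 ->
  exists del, 0 < del /\ forall w, Cmod (w - z)%C < del -> Re (q w) < 0.
Proof.
  intros Hc Hp. destruct (Hc (- Re (q z))) as [del [Hd K]]. lra. exists del. split; auto.
  intros w Hw. specialize (K w Hw). pose proof (re_le_Cmod (q w - q z)%C) as H.
  apply Rabs_le_between in H. unfold Re in *. simpl in H. lra.
Qed.

Lemma Cmod_pair_le (z : C) (u v : R) : Cmod (z - (u, v))%C <= Rabs (fst z - u) + Rabs (snd z - v).
Proof. eapply Rle_trans. apply Cmod_le_abs. simpl. right. reflexivity. Qed.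

Lemma abs_fst_le (z : C) : Rabs (fst z) <= Cmod z.
Proof. pose proof (Rmax_Cmod z). eapply Rle_trans. apply Rmax_l. exact H. Qed.
Lemma abs_snd_le (z : C) : Rabs (snd z) <= Cmod z.
Proof. pose proof (Rmax_Cmod z). eapply Rle_trans. apply Rmax_r. exact H. Qed.

Lemma compact_step (q : C -> C) (r0 : R) : 0 <= r0 < 1 ->
  (forall z, Cmod z < 1 -> Ccont q z) ->
  (forall z, Cmod z <= r0 -> 0 < Re (q z)) ->
  exists d, 0 < d /\ forall z, Cmod z < r0 + d -> Cmod z < 1 -> 0 < Re (q z).
Proof.
  intros Hr Hc Hpos.
  assert (Ex : forall u v : R, exists del : posreal,
     (Cmod (u, v) <= r0 -> forall w, Cmod (w - (u, v))%C < 2 * del -> 0 < Re (q w)) /\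
     (r0 < Cmod (u, v) -> 4 * del = Cmod (u, v) - r0)).
  { intros u v. destruct (Rle_lt_dec (Cmod (u, v)) r0) as [H|H].
    - destruct (Re_cont_pos q (u, v) (Hc (u, v) ltac:(lra)) (Hpos (u, v) H)) as [del [Hd K]].
      exists (mkposreal (del / 2) ltac:(lra)). simpl. split.
      + intros _ w Hw. apply K. lra.
      + intros; lra.
    - exists (mkposreal ((Cmod (u, v) - r0) / 4) ltac:(lra)). simpl. split.
      + intros; lra.
      + intros; field. }
  set (delta := fun u v => proj1_sig (constructive_indefinite_description _ (Ex u v))).
  assert (Hdelta : forall u v, (Cmod (u, v) <= r0 -> forall w, Cmod (w - (u, v))%C < 2 * delta u v -> 0 < Re (q w)) /\
     (r0 < Cmod (u, v) -> 4 * delta u v = Cmod (u, v) - r0)).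
  { intros u v. unfold delta. destruct (constructive_indefinite_description _ (Ex u v)) as [dl Hdl]. simpl. exact Hdl. }
  destruct (compactness_value_2d (-1) 1 (-1) 1 delta) as [d Hd].
  exists (d / 2). split. apply Rdiv_lt_0_compat. apply cond_pos. lra.
  intros z Hz1 Hz2.
  destruct (Rlt_dec 0 (Re (q z))) as [P|NP]; auto. exfalso.
  assert (Hx : -1 <= fst z <= 1) by (pose proof (abs_fst_le z); apply Rabs_le_between; lra).
  assert (Hy : -1 <= snd z <= 1) by (pose proof (abs_snd_le z); apply Rabs_le_between; lra).
  apply (Hd (fst z) (snd z) Hx Hy). intros [u [v [Hu [Hv [H1 [H2 H3]]]]]].
  pose proof (Cmod_pair_le z u v) as Hm.
  destruct (Hdelta u v) as [D1 D2].
  destruct (Rle_lt_dec (Cmod (u, v)) r0) as [H|H].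
  - apply NP. apply (D1 H). lra.
  - specialize (D2 H). pose proof (Cmod_rev_tri (u, v) z) as Ht.
    rewrite Cmod_sub_sym in Ht. pose proof (cond_pos d). lra.
Qed.

Lemma final_contra (q0 Phi K : C) : Re q0 = 0 -> 0 < Re Phi -> K = (RtoC 1 - q0 * Phi)%C ->
  Re K <= 0 -> Im K = 0 -> False.
Proof.
  intros H1 H2 E H3 H4. subst K. destruct q0 as [a b]. destruct Phi as [c e].
  unfold Re, Im in *. simpl in *. subst a.
  assert (b * c = 0) by lra.
  apply Rmult_integral in H. destruct H; [subst b|lra]. lra.
Qed.

Theorem min_principle (q dq Phi : C -> C) :
  (forall z, Cmod z < 1 -> Ccont q z) ->
  0 < Re (q (RtoC 0)) ->
  (forall z, Cmod z < 1 -> z <> RtoC 0 ->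
     CD q z (dq z) /\ (z * dq z)%C = (RtoC 1 - q z * Phi z)%C /\ 0 < Re (Phi z)) ->
  forall z, Cmod z < 1 -> 0 < Re (q z).
Proof.
  intros Hc Hq0 Hd w0 Hw0.
  destruct (Rlt_dec 0 (Re (q w0))) as [P|NP]; auto. exfalso.
  apply Rnot_lt_le in NP.
  set (R0 := Cmod w0).
  destruct (Re_cont_pos q (RtoC 0) (Hc _ ltac:(rewrite Cmod_0; lra)) Hq0) as [rho [Hrho Krho]].
  assert (Krho' : forall z, Cmod z < rho -> 0 < Re (q z)).
  { intros z Hz. apply Krho. replace (z - RtoC 0)%C with z by cring. auto. }
  assert (HR0 : rho <= R0).
  { destruct (Rle_lt_dec rho R0); auto. specialize (Krho' w0 r). lra. }
  set (B := fun r => 0 <= r <= R0 /\ forall z, Cmod z < r -> 0 < Re (q z)).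
  assert (Bb : bound B) by (exists R0; intros r [Hr _]; lra).
  assert (B0 : exists r, B r) by (exists 0; split; [pose proof (Cmod_ge_0 w0); unfold R0; lra|intros z Hz; pose proof (Cmod_ge_0 z); lra]).
  destruct (completeness B Bb B0) as [r0 [Hub Hlub]].
  assert (Hr0R : r0 <= R0) by (apply Hlub; intros r [Hr _]; lra).
  assert (Hr0p : rho / 2 <= r0).
  { apply Hub. split. lra. intros z Hz. apply Krho'. lra. }
  assert (Hb : forall z, Cmod z < r0 -> 0 < Re (q z)).
  { intros z Hz. destruct (classic (exists r, B r /\ Cmod z < r)) as [[r [[_ Hr] Hzr]]|NE].
    - apply Hr; auto.
    - exfalso. assert (r0 <= Cmod z). { apply Hlub. intros r Br. apply Rnot_lt_le. intro. apply NE. exists r; auto. } lra. }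
  assert (Hr01 : r0 < 1) by (unfold R0 in *; lra).
  assert (Hd0 : forall z, Cmod z <= r0 -> 0 <= Re (q z)).
  { intros z Hz. destruct (Rle_lt_or_eq_dec _ _ Hz) as [Hl|He]. left; apply Hb; auto.
    apply Rnot_lt_le. intros Hneg.
    destruct (Re_cont_neg q z (Hc z ltac:(lra)) Hneg) as [del [Hdel K]].
    set (eta := Rmin (1/2) (del / (2 * r0))).
    assert (Heta : 0 < eta) by (apply Rmin_pos; [lra|apply Rdiv_lt_0_compat; lra]).
    assert (He1 : eta <= 1/2) by apply Rmin_l.
    assert (He2 : eta <= del / (2 * r0)) by apply Rmin_r.
    set (u := (RtoC (1 - eta) * z)%C).
    assert (Hu1 : Cmod (u - z)%C < del).
    { replace (u - z)%C with (RtoC (- eta) * z)%C by (unfold u; cring).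
      rewrite Cmod_RtoC_mult, Rabs_left by lra. rewrite He.
      apply (Rmult_le_compat_r (2 * r0)) in He2; [|lra].
      replace (del / (2 * r0) * (2 * r0)) with del in He2 by (field; lra). nra. }
    assert (Hu2 : Cmod u < r0).
    { unfold u. rewrite Cmod_RtoC_mult, Rabs_pos_eq by lra. rewrite He. nra. }
    specialize (K u Hu1). specialize (Hb u Hu2). lra. }
  assert (Hex : exists z0, Cmod z0 = r0 /\ Re (q z0) <= 0).
  { apply NNPP. intros NE.
    assert (Hpos : forall z, Cmod z <= r0 -> 0 < Re (q z)).
    { intros z Hz. destruct (Rle_lt_or_eq_dec _ _ Hz) as [Hl|He]. apply Hb; auto.
      apply Rnot_le_lt. intros Hle. apply NE. exists z. auto. }
    destruct (compact_step q r0 ltac:(lra) Hc Hpos) as [d [Hdp Kd]].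
    destruct (Rle_lt_dec (r0 + d / 2) R0) as [Hle|Hlt].
    - assert (B (r0 + d / 2)).
      { split. lra. intros z Hz. apply Kd; unfold R0 in *; lra. }
      specialize (Hub _ H). lra.
    - assert (0 < Re (q w0)). { apply Kd. unfold R0 in *; lra. auto. }
      lra. }
  destruct Hex as [z0 [Hz0 Hqz0]].
  assert (Hq0' : Re (q z0) = 0) by (pose proof (Hd0 z0 ltac:(lra)); lra).
  assert (Hnz : z0 <> RtoC 0).
  { intros E. rewrite E, Cmod_0 in Hz0. lra. }
  destruct (Hd z0 ltac:(lra) Hnz) as [Hcd [Hid HPhi]].
  assert (Hrad := radial q z0 (dq z0) Hcd ltac:(rewrite Hz0; exact Hb) Hq0' ltac:(lra)).
  assert (Htan := tangential q z0 (dq z0) Hcd ltac:(rewrite Hz0; exact Hd0) Hq0' ltac:(lra)).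
  exact (final_contra (q z0) (Phi z0) (z0 * dq z0)%C Hq0' HPhi Hid Hrad Htan).
Qed.


Open Scope R_scope.

Lemma fst_lt1 (z : C) : Cmod z < 1 -> fst z < 1.
Proof. intros H. pose proof (abs_fst_le z). pose proof (Rle_abs (fst z)). lra. Qed.

Lemma CD_c be z : Cmod z < 1 -> CD (cfun be) z (RtoC (- be) * cfun be z / (RtoC 1 - z))%C.
Proof. intros H. destruct z as [x y]. apply CD_cfun. apply (fst_lt1 (x, y)). auto. Qed.

Lemma c_nz be z : Cmod z < 1 -> cfun be z <> RtoC 0.
Proof.
  intros H. destruct z as [x y]. rewrite cfun_N by (apply (fst_lt1 (x, y)); auto).
  unfold NU, NV, Cb, Sb, Eb. intros E. injection E. intros E2 E1.
  set (r := exp (be * ln (sqrt (Aq x y)))) in *. set (t := be * atan (Tq x y)) in *.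
  assert (0 < r) by apply exp_pos.
  pose proof (sin2_cos2 t). unfold Rsqr in H1.
  apply Rmult_integral in E1. apply Rmult_integral in E2.
  destruct E1; [lra|]. destruct E2; [lra|]. rewrite H2, H3 in H1. lra.
Qed.

Lemma c_0 be : cfun be (RtoC 0) = RtoC 1.
Proof.
  change (RtoC 0) with ((0, 0) : C). rewrite cfun_N by lra.
  unfold NU, NV, Eb, Cb, Sb, Aq, Tq, P1, P2, N1, I1.
  replace ((1 - 0) * (1 - 0) + 0 * 0) with 1 by ring. rewrite sqrt_1, ln_1.
  replace (- 0 * / (1 - 0)) with 0 by field. rewrite atan_0.
  replace (be * 0) with 0 by ring. rewrite exp_0, cos_0, sin_0. cring.
Qed.

Lemma quot_cont0 (F Gf : C -> C) : F (RtoC 0) = RtoC 0 -> CD F (RtoC 0) (RtoC 1) ->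
  Ccont Gf (RtoC 0) -> Gf (RtoC 0) = RtoC 1 ->
  Ccont (fun u => if Ceq_dec u (RtoC 0) then RtoC 1 else (F u / (u * Gf u))%C) (RtoC 0).
Proof.
  intros HF0 HF HG HG0 eps Heps.
  set (e := Rmin eps 1).
  assert (He : 0 < e) by (apply Rmin_pos; lra).
  assert (He1 : e <= 1) by apply Rmin_r. assert (He2 : e <= eps) by apply Rmin_l.
  destruct (HF (e / 4) ltac:(lra)) as [d1 [Hd1 K1]].
  destruct (HG (e / 4) ltac:(lra)) as [d2 [Hd2 K2]].
  exists (Rmin d1 d2). split. apply Rmin_pos; auto.
  intros u Hu.
  destruct (Ceq_dec (RtoC 0) (RtoC 0)) as [_|NN]; [|congruence].
  destruct (Ceq_dec u (RtoC 0)) as [Z|Z].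
  - replace (RtoC 1 - RtoC 1)%C with (RtoC 0) by cring. rewrite Cmod_0. lra.
  - replace (u - RtoC 0)%C with u in Hu by cring.
    assert (Hu1 : Cmod u < d1) by (eapply Rlt_le_trans; [exact Hu|apply Rmin_l]).
    assert (Hu2 : Cmod u < d2) by (eapply Rlt_le_trans; [exact Hu|apply Rmin_r]).
    specialize (K1 u). specialize (K2 u).
    replace (u - RtoC 0)%C with u in K1, K2 by cring.
    specialize (K1 Hu1). specialize (K2 Hu2). rewrite HF0 in K1. rewrite HG0 in K2.
    replace (F u - RtoC 0 - RtoC 1 * u)%C with (F u - u)%C in K1 by ring.
    assert (Hm : 0 < Cmod u) by (apply Cmod_gt_0; auto).
    assert (HGm : 3/4 <= Cmod (Gf u)).
    { pose proof (Cmod_rev_tri (RtoC 1) (Gf u)). rewrite Cmod_1, Cmod_sub_sym in H. lra. }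
    assert (HGn : Gf u <> RtoC 0). { intros E. rewrite E, Cmod_0 in HGm. lra. }
    replace (F u / (u * Gf u) - RtoC 1)%C with (((F u - u) - u * (Gf u - RtoC 1)) / (u * Gf u))%C by (field; auto).
    rewrite Cmod_div by (apply Cmult_neq_0; auto). rewrite Cmod_mult.
    assert (Hn : Cmod ((F u - u) - u * (Gf u - RtoC 1))%C <= e / 2 * Cmod u).
    { eapply Rle_trans. unfold Cminus at 1. apply Cmod_triangle. rewrite Cmod_opp, Cmod_mult. nra. }
    assert (HX : 0 < Cmod u * Cmod (Gf u)) by nra.
    apply (Rmult_lt_reg_r (Cmod u * Cmod (Gf u))). auto.
    set (N := Cmod ((F u - u) - u * (Gf u - RtoC 1))%C) in *.
    replace (N / (Cmod u * Cmod (Gf u)) * (Cmod u * Cmod (Gf u))) with N by (field; lra).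
    assert (e * Cmod u * (3/4) <= eps * (Cmod u * Cmod (Gf u))).
    { assert (e * Cmod u <= eps * Cmod u) by nra. 
      assert (0 <= e * Cmod u) by nra. nra. }
    nra.
Qed.

Lemma choose_fun (P : C -> C -> Prop) (D : C -> Prop) :
  (forall z, D z -> exists d, P z d) -> exists F : C -> C, forall z, D z -> P z (F z).
Proof.
  intros H.
  assert (H' : forall z, exists d, D z -> P z d).
  { intros z. destruct (classic (D z)) as [Dz|NDz].
    - destruct (H z Dz) as [d Hd]. exists d. auto.
    - exists (RtoC 0). intros; contradiction. }
  exists (fun z => proj1_sig (constructive_indefinite_description _ (H' z))).
  intros z Dz. destruct (constructive_indefinite_description _ (H' z)) as [d Hd]. simpl. auto.
Qed.

Lemma Cmod_lt1_sq (z : C) : Cmod z < 1 -> fst z * fst z + snd z * snd z < 1.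
Proof.
  intros H. unfold Cmod in H. destruct z as [x y]. cbn [fst snd] in *.
  assert (0 <= x ^ 2 + y ^ 2) by nra.
  assert (sqrt (x ^ 2 + y ^ 2) * sqrt (x ^ 2 + y ^ 2) = x ^ 2 + y ^ 2) by (apply sqrt_sqrt; auto).
  pose proof (sqrt_pos (x ^ 2 + y ^ 2)). nra.
Qed.

Lemma re_frac (z : C) : Cmod z < 1 -> -1/2 < Re (z / (RtoC 1 - z))%C.
Proof.
  intros H. pose proof (Cmod_lt1_sq z H) as Hs. pose proof (fst_lt1 z H) as Hx.
  destruct z as [x y]. cbn [fst snd] in *. unfold Re, Cdiv, Cinv, Cmult, Cminus, Cplus, Copp, RtoC. cbn [fst snd].
  set (D := (1 + - x) ^ 2 + (0 + - y) ^ 2).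
  assert (HD : 0 < D) by (unfold D; nra).
  replace (x * ((1 + - x) / D) - y * (- (0 + - y) / D)) with ((x * (1 - x) - y * y) / D) by (field; lra).
  apply (Rmult_lt_reg_r D). auto. replace ((x * (1 - x) - y * y) / D * D) with (x * (1 - x) - y * y) by (field; lra).
  unfold D. nra.
Qed.

Lemma Cinv_neq_0 (x : C) : x <> RtoC 0 -> (/ x)%C <> RtoC 0.
Proof.
  intros H E. apply C1_nz. rewrite <- (Cinv_r x H). rewrite E. ring.
Qed.

Lemma C_beta_seg beta f (h : C -> C) :
  (forall w, w <> RtoC 0 -> h w = (f w / (w * cfun beta w))%C) ->
  forall z, C_beta beta f z = seg h (RtoC 0) z.
Proof.
  intros Hh z. unfold C_beta, seg, Fs.
  apply (@RInt_ext C_R_CompleteNormedModule). intros t Ht.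
  rewrite Rmin_left in Ht by lra. rewrite Rmax_right in Ht by lra.
  destruct (Ceq_dec z (RtoC 0)) as [Z|Z].
  - subst z. cring.
  - replace (RtoC 0 + RtoC t * (z - RtoC 0))%C with (RtoC t * z)%C by cring.
    rewrite Hh. unfold cfun. cring.
    apply Cmult_neq_0; auto. intros E. apply RtoC_inj in E. lra.
Qed.

Theorem theorem2p10 (lam beta : R) (f : C -> C) :
  0 <= lam < 1 -> 0 <= beta <= 2 * lam ->
  starlike_of_order lam f -> starlike (C_beta beta f).
Proof.
  intros Hlam Hbe [[Han [Hf0 Hf'0]] [Hnz Hre]].
  set (c := cfun beta).
  destruct (choose_fun (fun z d => CD f z d) (fun z => Cmod z < 1)) as [fd Hfd].
  { intros z Hz. destruct (Han z Hz) as [d Hd]. exists d. apply is_derive_CD. exact Hd. }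
  assert (Hf1 : CD f (RtoC 0) (RtoC 1)) by (apply is_derive_CD; exact Hf'0).
  set (h := fun w => if Ceq_dec w (RtoC 0) then RtoC 1 else (f w / (w * c w))%C).
  set (cd := fun w => (RtoC (- beta) * c w / (RtoC 1 - w))%C).
  set (hd := fun w => (fd w * / (w * c w) + f w * ((RtoC 1 * c w + w * cd w) * - / ((w * c w) * (w * c w))))%C).
  assert (Hcnz : forall w, Cmod w < 1 -> c w <> RtoC 0) by (intros; apply c_nz; auto).
  assert (Hh_eq : forall w, w <> RtoC 0 -> h w = (f w / (w * c w))%C).
  { intros w Hw. unfold h. destruct (Ceq_dec w (RtoC 0)); [contradiction|reflexivity]. }
  assert (Hh0 : h (RtoC 0) = RtoC 1).
  { unfold h. destruct (Ceq_dec (RtoC 0) (RtoC 0)); [reflexivity|congruence]. }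
  assert (Hhd : forall w, Cmod w < 1 -> w <> RtoC 0 -> CD h w (hd w)).
  { intros w Hw Hw0.
    apply CD_ext_loc with (f := fun u => (f u * / (u * c u))%C).
    - exists (Cmod w). split. apply Cmod_gt_0; auto. intros u Hu. rewrite Hh_eq. reflexivity.
      intros E. subst u. replace (RtoC 0 - w)%C with (- w)%C in Hu by cring. rewrite Cmod_opp in Hu. lra.
    - unfold hd. apply (CD_mult f (fun u => / (u * c u))%C w). apply Hfd; auto.
      apply (CD_comp (fun v => (/ v)%C) (fun u => u * c u)%C w (- / ((w * c w) * (w * c w)))%C (RtoC 1 * c w + w * cd w)%C).
      + apply CD_inv. apply Cmult_neq_0; auto.
      + apply CD_mult. apply CD_id. unfold cd, c. apply CD_c. auto. }
  assert (Hhc : forall w, Cmod w < 1 -> Ccont h w).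
  { intros w Hw. destruct (Ceq_dec w (RtoC 0)) as [Z|Z].
    - subst w. apply (quot_cont0 f c); auto.
      + unfold c. apply (CD_cont _ _ _ (CD_c beta (RtoC 0) ltac:(rewrite Cmod_0; lra))).
      + unfold c. apply c_0.
    - exact (CD_cont _ _ _ (Hhd w Hw Z)). }
  assert (Hprim := prim_CD h Hhc (fun w Hw Hw0 => ex_intro _ (hd w) (Hhd w Hw Hw0))).
  assert (Eg := C_beta_seg beta f h Hh_eq).
  set (g := C_beta beta f).
  assert (Hg : forall z, Cmod z < 1 -> CD g z (h z)).
  { intros z Hz. apply CD_ext_loc with (f := fun w => seg h (RtoC 0) w).
    exists 1. split. lra. intros u _. unfold g. rewrite Eg. reflexivity.
    apply Hprim. exact Hz. }
  assert (Hg0 : g (RtoC 0) = RtoC 0) by (unfold g; rewrite Eg; apply seg_zero).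
  assert (Hhnz : forall z, Cmod z < 1 -> h z <> RtoC 0).
  { intros z Hz. destruct (Ceq_dec z (RtoC 0)) as [Z|Z].
    - subst z. rewrite Hh0. apply C1_nz.
    - rewrite Hh_eq by auto. unfold Cdiv. apply Cmult_neq_0. apply Hnz; auto.
      apply Cinv_neq_0. apply Cmult_neq_0; auto. }
  assert (Hg1 : CD g (RtoC 0) (RtoC 1)) by (rewrite <- Hh0; apply Hg; rewrite Cmod_0; lra).
  set (q := fun z => if Ceq_dec z (RtoC 0) then RtoC 1 else (g z / (z * h z))%C).
  set (dq := fun z => (h z * / (z * h z) + g z * ((RtoC 1 * h z + z * hd z) * - / ((z * h z) * (z * h z))))%C).
  set (Phi := fun z => (RtoC 1 + z * hd z / h z)%C).
  assert (Hq_eq : forall z, z <> RtoC 0 -> q z = (g z / (z * h z))%C).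
  { intros z Hz. unfold q. destruct (Ceq_dec z (RtoC 0)); [contradiction|reflexivity]. }
  assert (Hq0 : q (RtoC 0) = RtoC 1).
  { unfold q. destruct (Ceq_dec (RtoC 0) (RtoC 0)); [reflexivity|congruence]. }
  assert (HqCD : forall z, Cmod z < 1 -> z <> RtoC 0 -> CD q z (dq z)).
  { intros w Hw Hw0.
    apply CD_ext_loc with (f := fun u => (g u * / (u * h u))%C).
    - exists (Cmod w). split. apply Cmod_gt_0; auto. intros u Hu. rewrite Hq_eq. reflexivity.
      intros E. subst u. replace (RtoC 0 - w)%C with (- w)%C in Hu by cring. rewrite Cmod_opp in Hu. lra.
    - unfold dq. apply (CD_mult g (fun u => / (u * h u))%C w). apply Hg; auto.
      apply (CD_comp (fun v => (/ v)%C) (fun u => u * h u)%C w (- / ((w * h w) * (w * h w)))%C (RtoC 1 * h w + w * hd w)%C).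
      + apply CD_inv. apply Cmult_neq_0; auto.
      + apply CD_mult. apply CD_id. apply Hhd; auto. }
  assert (Hqc : forall z, Cmod z < 1 -> Ccont q z).
  { intros w Hw. destruct (Ceq_dec w (RtoC 0)) as [Z|Z].
    - subst w. apply (quot_cont0 g h); try assumption. apply Hhc. rewrite Cmod_0; lra.
    - exact (CD_cont _ _ _ (HqCD w Hw Z)). }
  assert (HPhi : forall z, Cmod z < 1 -> z <> RtoC 0 -> 0 < Re (Phi z)).
  { intros z Hz Hz0.
    assert (H1z : (RtoC 1 - z)%C <> RtoC 0).
    { intros E. pose proof (fst_lt1 z Hz). apply (f_equal fst) in E. simpl in E. lra. }
    pose proof (Hcnz z Hz) as Hcz. pose proof (Hnz z Hz Hz0) as Hfz.
    assert (E : Phi z = (z * fd z / f z + RtoC beta * (z / (RtoC 1 - z)))%C).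
    { unfold Phi, hd, cd. rewrite Hh_eq by auto. rewrite RtoC_opp. field. auto. }
    rewrite E. rewrite re_plus, re_scal_l.
    pose proof (Hre z Hz Hz0 (fd z) (CD_is_derive _ _ _ (Hfd z Hz))).
    pose proof (re_frac z Hz). nra. }
  assert (Hid : forall z, Cmod z < 1 -> z <> RtoC 0 -> (z * dq z)%C = (RtoC 1 - q z * Phi z)%C).
  { intros z Hz Hz0. pose proof (Hhnz z Hz). unfold dq, Phi. rewrite Hq_eq by auto. field. auto. }
  assert (Hpos := min_principle q dq Phi Hqc ltac:(rewrite Hq0; simpl; lra)
     (fun z Hz Hz0 => conj (HqCD z Hz Hz0) (conj (Hid z Hz Hz0) (HPhi z Hz Hz0)))).
  assert (Hgnz : forall z, Cmod z < 1 -> z <> RtoC 0 -> g z <> RtoC 0).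
  { intros z Hz Hz0 E. pose proof (Hpos z Hz) as P. rewrite Hq_eq in P by auto. rewrite E in P.
    unfold Cdiv in P. rewrite Cmult_0_l in P. simpl in P. lra. }
  split; [|split].
  - split; [|split].
    + intros z Hz. exists (h z). apply CD_is_derive. apply Hg; auto.
    + exact Hg0.
    + apply CD_is_derive. exact Hg1.
  - exact Hgnz.
  - intros z Hz Hz0 d Hd. apply is_derive_CD in Hd.
    pose proof (CD_unique _ _ _ _ Hd (Hg z Hz)) as Ed. subst d.
    pose proof (Hgnz z Hz Hz0). pose proof (Hhnz z Hz).
    assert (E : (z * h z / g z)%C = (/ q z)%C).
    { rewrite Hq_eq by auto. field. auto. }
    change (0 < Re (z * h z / g z)%C). rewrite E.
    pose proof (Hpos z Hz) as P. destruct (q z) as [a b]. unfold Re in *. simpl in *.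
    apply Rdiv_lt_0_compat. auto. nra.
Qed.
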